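(* Let $0\le\alpha<\alpha'_{\min}:=\min(v_0/8,\gamma/(2V^0))$, let $u_0\in C_\alpha$ and let $(s,u)$ be the solution of the free-interface problem with initial data $u_0$. Then for all $t>0$ $$|(T_1(t)u_0)_x|_\alpha\le \mathcal{M}(v_0,V^0,\alpha,\gamma):=V^0\max\Big[\frac{8}{e v_0},\ \frac12\Big(1+\frac{V^0}{v_0}\Big)e^{\alpha},\ \frac{2}{\sqrt\gamma}+6\Big],$$ where the $x$-derivative is taken for $x\neq s(t)$.
   Context: Fix $\gamma>0$, $0<v_0\le V^0$. The kinetics $g:[0,\infty)\to\mathbb{R}$ is monotonically decreasing, differentiable, $|g'|\le C$, $-V^0\le g\le -v_0$. Free-interface problem: find $s(t)$, $s(0)=0$, and $u(x,t)$ with $u_t=u_{xx}-\gamma u$ for $x\ne s(t)$, $t>0$; $u(x,0)=u_0(x)$; $g(u(s(t),t))=v(t)$; $u_x^+(s(t),t)-u_x^-(s(t),t)=v(t)$, with $v=s'$, $u_x^\pm$ one-sided derivatives, $u\to0$ at $\pm\infty$; the classical solution exists, is unique, and $-V^0\le v\le-v_0$. With $G(x,t,\xi,\tau)=[4\pi(t-\tau)]^{-1/2}\exp\{-(x-\xi)^2/(4(t-\tau))\}$, $(T_1(t)u_0)(x)=-\int_0^t e^{-\gamma(t-\tau)}G(x,t,s(\tau),\tau)v(\tau)d\tau$. Weighted norms: $|f|_\alpha=\sup_x e^{\alpha|x|}|f(x)|$, $C_\alpha=\{f\in C(\mathbb{R}):|f|_\alpha<\infty\}$; for functions associated with the solution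 at time $t$, $|f(\cdot,t)|_\alpha:=\sup_{x\ne s(t)} e^{\alpha|x-s(t)|}|f(x,t)|$. *)

(* Defs.v *)
From Stdlib Require Import Reals Lra.
From Coquelicot Require Import Coquelicot.
Open Scope R_scope.

Definition heatG (x t xi tau : R) : R :=
  / sqrt (4 * PI * (t - tau)) * exp (- (x - xi) ^ 2 / (4 * (t - tau))).

Definition T1 (gamma : R) (s v : R -> R) (t x : R) : R :=
  - RInt (fun tau => exp (- gamma * (t - tau)) * heatG x t (s tau) tau * v tau) 0 t.

Definition kinetics (v0 V0 C : R) (g : R -> R) : Prop :=
  (forall a b, 0 <= a -> a <= b -> g b <= g a) /\
  (forall a, 0 < a -> ex_derive g a /\ Rabs (Derive g a) <= C) /\
  (forall a, 0 <= a -> - V0 <= g a <= - v0).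

Definition in_C_alpha (alpha : R) (f : R -> R) : Prop :=
  (forall x, continuous f x) /\
  exists K, forall x, exp (alpha * Rabs x) * Rabs (f x) <= K.

Definition fi_solution (gamma v0 V0 : R) (g u0 : R -> R)
    (s v : R -> R) (u : R -> R -> R) : Prop :=
  s 0 = 0 /\
  filterlim s (at_right 0) (locally 0) /\
  (forall t, 0 < t -> is_derive s t (v t)) /\
  (forall t, 0 < t -> continuous v t) /\
  (forall t, 0 <= t -> - V0 <= v t <= - v0) /\
  (forall x t, 0 <= t ->
     filterlim (fun p : R * R => u (fst p) (snd p))
       (within (fun p : R * R => 0 <= snd p) (locally (x, t))) (locally (u x t))) /\
  (forall x, u x 0 = u0 x) /\
  (forall x t, 0 < t -> x <> s t ->
     ex_derive (fun tau => u x tau) t /\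
     (forall y, y <> s t -> ex_derive (fun z => u z t) y) /\
     ex_derive (fun y => Derive (fun z => u z t) y) x /\
     Derive (fun tau => u x tau) t =
       Derive (fun y => Derive (fun z => u z t) y) x - gamma * u x t) /\
  (forall t, 0 < t -> 0 <= u (s t) t /\ g (u (s t) t) = v t) /\
  (forall t, 0 < t -> exists dp dm : R,
     filterlim (fun h => (u (s t + h) t - u (s t) t) / h) (at_right 0) (locally dp) /\
     filterlim (fun h => (u (s t + h) t - u (s t) t) / h) (at_left 0) (locally dm) /\
     dp - dm = v t) /\
  (forall t, 0 <= t ->
     is_lim (fun x => u x t) p_infty 0 /\ is_lim (fun x => u x t) m_infty 0).

Definition bigM (v0 V0 alpha gamma : R) : R :=
  V0 * Rmax (8 / (exp 1 * v0))
            (Rmax (/ 2 * (1 + V0 / v0) * exp alpha) (2 / sqrt gamma + 6)).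

(* Main.v *)
Require Import Defs.
From Stdlib Require Import Reals Lra Classical.
From Coquelicot Require Import Coquelicot.
Open Scope R_scope.

Lemma ex_RInt_approx (f : R -> R) (a b : R) : a < b ->
 (forall eps : posreal, exists g h : R -> R, ex_RInt g a b /\ ex_RInt h a b /\
   (forall x, a <= x <= b -> Rabs (f x - g x) <= h x) /\ RInt h a b < eps) ->
 ex_RInt f a b.
Proof.
  intros Hab H.
  assert (Hs : sign (b - a) = 1) by (apply sign_eq_1; lra).
  unfold ex_RInt, is_RInt.
  apply (proj1 (filterlim_locally_cauchy (F := Riemann_fine a b) (fun ptd => scal (sign (b - a)) (Riemann_sum f ptd)))).
  intros eps.
  assert (He7 : 0 < eps / 7) by (destruct eps; simpl; lra).
  destruct (H (mkposreal _ He7)) as (g & h & Hg & Hh & Hfg & Hint). simpl in Hint.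
  destruct Hg as [Ig HIg]. destruct Hh as [Ih HIh].
  pose proof (is_RInt_unique _ _ _ _ HIh) as EIh. rewrite EIh in Hint.
  pose proof (proj1 (filterlim_locally _ _) HIg (mkposreal _ He7)) as F1.
  pose proof (proj1 (filterlim_locally _ _) HIh (mkposreal _ He7)) as F2.
  exists (fun ptd => (pointed_subdiv ptd /\ SF_h ptd = Rmin a b /\ seq.last (SF_h ptd) (SF_lx ptd) = Rmax a b) /\
     ball Ig (eps/7) (scal (sign (b - a)) (Riemann_sum g ptd)) /\
     ball Ih (eps/7) (scal (sign (b - a)) (Riemann_sum h ptd))).
  split.
  - unfold Riemann_fine, within in *.
    generalize (filter_and _ _ F1 F2). apply filter_imp. simpl. intros ptd [A1 A2] D. auto.
  - rewrite Hs. rewrite Rmin_left in * by lra. rewrite Rmax_right in * by lra.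
    assert (key : forall u, (pointed_subdiv u /\ SF_h u = a /\ seq.last (SF_h u) (SF_lx u) = b) ->
       ball Ig (eps/7) (scal 1 (Riemann_sum g u)) ->
       ball Ih (eps/7) (scal 1 (Riemann_sum h u)) ->
       Rabs (Riemann_sum f u - Ig) < 3 * (eps/7)).
    { intros u [Hp [Hu1 Hu2]] Bg Bh.
      unfold ball in Bg, Bh; simpl in Bg, Bh; unfold AbsRing_ball, abs, minus, plus, opp, scal in Bg, Bh; simpl in Bg, Bh; unfold mult in Bg, Bh; simpl in Bg, Bh.
      rewrite Rmult_1_l in Bg, Bh.
      assert (N := Riemann_sum_norm (V:=R_NormedModule) (fun x => minus (f x) (g x)) h u Hp).
      assert (N' : Rabs (Riemann_sum f u - Riemann_sum g u) <= Riemann_sum h u).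
      { rewrite <- (Riemann_sum_minus (V:=R_ModuleSpace)). apply N. intros t Ht. rewrite Hu2 in Ht. rewrite Hu1 in Ht. apply Hfg. exact Ht. }
      clear N. rename N' into N.
      apply Rabs_def2 in Bg. apply Rabs_def2 in Bh.
      apply Rabs_le_between in N.
      apply Rabs_def1; lra. }
    intros u v [Du [Bgu Bhu]] [Dv [Bgv Bhv]].
    rewrite Hs in *.
    pose proof (key u Du Bgu Bhu). pose proof (key v Dv Bgv Bhv).
    unfold ball; simpl; unfold AbsRing_ball, abs, minus, plus, opp, scal; simpl; unfold mult; simpl.
    rewrite !Rmult_1_l.
    apply Rabs_def2 in H0. apply Rabs_def2 in H1. apply Rabs_def1; lra.
Qed.

Lemma ex_RInt_bounded_open (f : R -> R) (a b B : R) : a < b ->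
  (forall x, a <= x <= b -> Rabs (f x) <= B) ->
  (forall c d, a < c -> c < d -> d < b -> ex_RInt f c d) ->
  ex_RInt f a b.
Proof.
  intros Hab HB Hcd.
  apply ex_RInt_approx; auto.
  intros eps.
  assert (HB0 : 0 <= B) by (specialize (HB a); pose proof (Rabs_pos (f a)); lra).
  set (eta := Rmin ((b - a) / 4) (eps / (2 * (B + 1)))).
  assert (Heta : 0 < eta).
  { unfold eta. apply Rmin_pos. lra. destruct eps; simpl. apply Rdiv_lt_0_compat; lra. }
  assert (Heta1 : eta <= (b - a) / 4) by apply Rmin_l.
  assert (Heta2 : eta <= eps / (2 * (B + 1))) by apply Rmin_r.
  set (c := a + eta). set (d := b - eta).
  assert (Hcd' : a < c /\ c < d /\ d < b) by (unfold c, d; lra).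
  exists (fun x => if Rle_dec c x then (if Rle_dec x d then f x else 0) else 0).
  exists (fun x => if Rle_dec c x then (if Rle_dec x d then 0 else B) else B).
  assert (E1 : forall (u v w : R) (k : R -> R), a <= u -> u < v -> v <= b -> (forall x, u < x < v -> k x = w) -> is_RInt k u v ((v - u) * w)).
  { intros u v w k Hu Huv Hv Hk. change ((v - u) * w) with (scal (v - u) w). eapply is_RInt_ext. 2: apply (is_RInt_const (V:=R_NormedModule)).
    intros x Hx. rewrite Rmin_left in Hx by lra. rewrite Rmax_right in Hx by lra. symmetry. apply Hk. lra. }
  repeat split.
  - apply ex_RInt_Chasles with c. 
    + exists ((c - a) * 0). apply E1; try lra. intros x Hx. destruct (Rle_dec c x); [lra|auto].
    + apply ex_RInt_Chasles with d.
      * apply ex_RInt_ext with f. intros x Hx. rewrite Rmin_left in Hx by lra. rewrite Rmax_right in Hx by lra.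
        destruct (Rle_dec c x); [|lra]. destruct (Rle_dec x d); [auto|lra].
        apply Hcd; lra.
      * exists ((b - d) * 0). apply E1; try lra. intros x Hx. destruct (Rle_dec c x); [|lra]. destruct (Rle_dec x d); [lra|auto].
  - apply ex_RInt_Chasles with c. 
    + exists ((c - a) * B). apply E1; try lra. intros x Hx. destruct (Rle_dec c x); [lra|auto].
    + apply ex_RInt_Chasles with d.
      * exists ((d - c) * 0). apply E1; try lra. intros x Hx. destruct (Rle_dec c x); [|lra]. destruct (Rle_dec x d); [auto|lra].
      * exists ((b - d) * B). apply E1; try lra. intros x Hx. destruct (Rle_dec c x); [|lra]. destruct (Rle_dec x d); [lra|auto].
  - intros x Hx. destruct (Rle_dec c x).
    + destruct (Rle_dec x d). rewrite Rminus_diag, Rabs_R0. lra. rewrite Rminus_0_r. auto.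
    + rewrite Rminus_0_r. auto.
  - set (h := fun x => if Rle_dec c x then (if Rle_dec x d then 0 else B) else B).
    assert (I1 : is_RInt h a c ((c - a) * B)). { apply E1; try lra. intros x Hx. unfold h. destruct (Rle_dec c x); [lra|auto]. }
    assert (I2 : is_RInt h c d ((d - c) * 0)). { apply E1; try lra. intros x Hx. unfold h. destruct (Rle_dec c x); [|lra]. destruct (Rle_dec x d); [auto|lra]. }
    assert (I3 : is_RInt h d b ((b - d) * B)). { apply E1; try lra. intros x Hx. unfold h. destruct (Rle_dec c x); [|lra]. destruct (Rle_dec x d); [lra|auto]. }
    assert (I := is_RInt_Chasles (V:=R_NormedModule) h a c b _ _ I1 (is_RInt_Chasles (V:=R_NormedModule) h c d b _ _ I2 I3)).
    rewrite (is_RInt_unique _ _ _ _ I). unfold plus; simpl.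
    unfold c, d. 
    assert (eta * (2 * (B + 1)) <= eps).
    { apply Rmult_le_compat_r with (r := 2 * (B + 1)) in Heta2; [|lra].
      unfold Rdiv in Heta2. rewrite Rmult_assoc, Rinv_l in Heta2 by lra. lra. }
    destruct eps; simpl in *. nra.
Qed.

Lemma mono1 (F dF : R -> R) p q : p <= q ->
  (forall r, p < r < q -> is_derive F r (dF r) /\ 0 <= dF r) ->
  (forall r, p <= r <= q -> continuous F r) -> F p <= F q.
Proof.
  intros Hpq Hd Hc.
  destruct (Req_dec p q) as [->|Hne]. lra.
  assert (pr1 : forall c, p < c < q -> derivable_pt F c).
  { intros c Hc'. exists (dF c). apply is_derive_Reals. apply Hd; auto. }
  assert (pr2 : forall c, p < c < q -> derivable_pt id c).
  { intros c _. apply derivable_pt_id. }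
  destruct (MVT F id p q pr1 pr2) as [c [P HM]].
  - lra.
  - intros r Hr. apply continuity_pt_filterlim. apply Hc. auto.
  - intros r Hr. apply derivable_continuous_pt. apply derivable_pt_id.
  - rewrite (derive_pt_eq_0 F c (dF c) (pr1 c P)) in HM.
    2: apply is_derive_Reals; apply Hd; auto.
    rewrite (derive_pt_eq_0 id c 1 (pr2 c P)) in HM.
    2: apply derivable_pt_lim_id.
    unfold id in HM. destruct (Hd c P) as [_ Hpos]. nra.
Qed.

Lemma mono2 (F dF : R -> R) (E : R -> Prop) p q : p <= q ->
  (forall r1 r2, E r1 -> E r2 -> r1 = r2) ->
  (forall r, p < r < q -> ~ E r -> is_derive F r (dF r) /\ 0 <= dF r) ->
  (forall r, p <= r <= q -> continuous F r) -> F p <= F q.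
Proof.
  intros Hpq HE Hd Hc.
  destruct (classic (exists r, p < r < q /\ E r)) as [[r [Hr Er]]|Hn].
  - apply Rle_trans with (F r).
    + apply mono1 with dF. lra.
      intros r' Hr'. apply Hd. lra. intros Er'. specialize (HE _ _ Er Er'). lra.
      intros r' Hr'. apply Hc. lra.
    + apply mono1 with dF. lra.
      intros r' Hr'. apply Hd. lra. intros Er'. specialize (HE _ _ Er Er'). lra.
      intros r' Hr'. apply Hc. lra.
  - apply mono1 with dF; auto. intros r Hr. apply Hd; auto. intros Er. apply Hn. eauto.
Qed.

Lemma mono_ends (F : R -> R) t : 0 < t ->
  (forall a b, 0 < a -> a <= b -> b < t -> F a <= F b) ->
  (forall eps, 0 < eps -> exists del, 0 < del /\ forall r, 0 < r < del -> Rabs (F r - F 0) < eps) ->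
  (forall eps, 0 < eps -> exists del, 0 < del /\ forall r, t - del < r < t -> Rabs (F r - F t) < eps) ->
  F 0 <= F t.
Proof.
  intros Ht Hm H0 Ht'.
  apply Rnot_lt_le. intros Hlt.
  set (eps := (F 0 - F t) / 3).
  assert (He : 0 < eps) by (unfold eps; lra).
  destruct (H0 eps He) as [d1 [Hd1 H1]].
  destruct (Ht' eps He) as [d2 [Hd2 H2]].
  set (a := Rmin (d1/2) (t/2)).
  set (b := Rmax (t - d2/2) a).
  assert (Ha : 0 < a /\ a < d1 /\ a < t).
  { unfold a. split. apply Rmin_pos; lra. split. 
    apply Rle_lt_trans with (d1/2). apply Rmin_l. lra.
    apply Rle_lt_trans with (t/2). apply Rmin_r. lra. }
  assert (Hb : a <= b /\ t - d2 < b /\ b < t).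
  { unfold b. split. apply Rmax_r. split. apply Rlt_le_trans with (t - d2/2). lra. apply Rmax_l.
    apply Rmax_lub_lt; lra. }
  specialize (H1 a ltac:(lra)). specialize (H2 b ltac:(lra)).
  specialize (Hm a b ltac:(lra) ltac:(lra) ltac:(lra)).
  apply Rabs_def2 in H1. apply Rabs_def2 in H2. unfold eps in *. lra.
Qed.

Definition pw (P : R) := P * sqrt P.

Lemma pw_pos P : 0 < P -> 0 < pw P.
Proof. intros. unfold pw. apply Rmult_lt_0_compat; auto. apply sqrt_lt_R0; auto. Qed.

Lemma pw_le P Q : 0 < P -> P <= Q -> pw P <= pw Q.
Proof.
  intros HP HPQ. unfold pw. apply Rmult_le_compat; try lra.
  apply sqrt_pos. apply sqrt_le_1_alt. auto.
Qed.

Lemma inv_pw_le P Q : 0 < P -> P <= Q -> / pw Q <= / pw P.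
Proof. intros. apply Rinv_le_contravar. apply pw_pos; auto. apply pw_le; auto. Qed.

Lemma pw_mult P Q : 0 <= P -> 0 <= Q -> pw (P * Q) = pw P * pw Q.
Proof. intros. unfold pw. rewrite sqrt_mult by auto. ring. Qed.

Lemma gauss_pw (sg Y : R) : 0 < sg ->
  exp (- (Y ^ 2 / (8 * sg))) / pw sg <= / pw (sg + Y ^ 2 / 12).
Proof.
  intros Hs.
  set (q := Y ^ 2 / (12 * sg)).
  assert (Hq : 0 <= q) by (unfold q; apply Rmult_le_pos; [nra| left; apply Rinv_0_lt_compat; lra]).
  assert (E1 : sg + Y ^ 2 / 12 = sg * (1 + q)) by (unfold q; field; lra).
  assert (E2 : Y ^ 2 / (8 * sg) = q + q / 2) by (unfold q; field; lra).
  rewrite E1, E2, pw_mult by lra.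
  rewrite Ropp_plus_distr, exp_plus.
  assert (Hsq : sqrt (exp q) = exp (q / 2)).
  { replace (exp q) with (exp (q/2) * exp (q/2)). apply sqrt_square. left; apply exp_pos.
    rewrite <- exp_plus. f_equal. field. }
  assert (Hpw : pw (1 + q) <= exp q * exp (q / 2)).
  { replace (exp q * exp (q/2)) with (pw (exp q)) by (unfold pw; rewrite Hsq; ring).
    apply pw_le. lra. apply exp_ineq1_le. }
  rewrite !exp_Ropp.
  assert (0 < pw sg) by (apply pw_pos; auto).
  assert (0 < pw (1 + q)) by (apply pw_pos; lra).
  assert (0 < exp q) by apply exp_pos. assert (0 < exp (q/2)) by apply exp_pos.
  replace (/ exp q * / exp (q / 2) / pw sg) with (/ (pw sg * (exp q * exp (q / 2)))).
  2: { field. repeat split; lra. }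
  apply Rinv_le_contravar. apply Rmult_lt_0_compat; auto.
  apply Rmult_le_compat_l; lra.
Qed.

Lemma expo_ineq al gam v0 V0 z d sg : 0 < v0 -> v0 <= V0 -> 0 < gam -> 0 <= al ->
  al <= v0 / 8 -> al <= gam / (2 * V0) -> 0 < sg -> v0 * sg <= d -> d <= V0 * sg ->
  al * Rabs z - gam * sg - (z - d) ^ 2 / (4 * sg) <= - ((z - d) ^ 2 / (8 * sg)).
Proof.
  intros Hv0 HV0 Hg Hal Ha1 Ha2 Hs Hd1 Hd2.
  assert (Ha2' : 2 * al * V0 <= gam).
  { apply Rmult_le_compat_r with (r := 2 * V0) in Ha2; [|lra].
    unfold Rdiv in Ha2. rewrite Rmult_assoc, Rinv_l in Ha2 by lra. lra. }
  assert (K : al * Rabs z <= gam * sg + (z - d) ^ 2 / (8 * sg)).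
  { assert (Hd0 : 0 < d) by nra.
    assert (G1 : 2 * al * d <= gam * sg) by nra.
    assert (Hq : (z - d) ^ 2 / (8 * sg) * (8 * sg) = (z - d) ^ 2) by (field; lra).
    set (Q := (z - d) ^ 2 / (8 * sg)) in *.
    destruct (Rle_or_lt 0 z) as [Hz|Hz].
    - rewrite Rabs_right by lra.
      destruct (Rle_or_lt (z/2) d) as [Hzd|Hzd].
      + assert (0 <= Q) by (unfold Q; apply Rmult_le_pos; [apply pow2_ge_0|left; apply Rinv_0_lt_compat; lra]). assert (al * z <= al * (2*d)) by (apply Rmult_le_compat_l; lra). lra.
      +
        assert (H1 : (z - d) * (v0 * sg) <= (z - d) ^ 2) by nra.
        assert (H1' : al * (z - 2 * d) * (8 * sg) <= v0 * (z - 2 * d) * sg).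
        { assert (0 <= (z - 2 * d) * sg) by nra. nra. }
        assert (H2 : al * (z - 2 * d) * (8 * sg) <= Q * (8 * sg)) by (rewrite Hq; nra).
        assert (H3 : al * (z - 2 * d) <= Q) by (apply Rmult_le_reg_r with (8 * sg); lra).
        nra.
    - rewrite Rabs_left by lra.
      assert (H1 : 4 * (- z) * d <= (z - d) ^ 2) by (assert (0 <= (z + d) ^ 2) by apply pow2_ge_0; nra).
      assert (H1' : al * (- z) * (8 * sg) <= v0 * (- z) * sg).
      { assert (0 <= (- z) * sg) by nra. nra. }
      assert (H2 : al * (- z) * (8 * sg) <= Q * (8 * sg)) by (rewrite Hq; nra).
      assert (H3 : al * (- z) <= Q) by (apply Rmult_le_reg_r with (8 * sg); lra).
      nra. }
  assert (E : (z - d) ^ 2 / (4 * sg) = 2 * ((z - d) ^ 2 / (8 * sg))) by (field; lra).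
  rewrite E. lra.
Qed.

Definition rho (V0 r : R) := / (sqrt r * pw (/ V0 + r / 12)).

Lemma rho_eq V0 r : 0 < V0 -> 0 < r -> rho V0 r = r / pw (r / V0 + r ^ 2 / 12).
Proof.
  intros HV Hr. unfold rho.
  replace (r / V0 + r ^ 2 / 12) with (r * (/ V0 + r / 12)) by (field; lra).
  assert (HQ : 0 < / V0 + r / 12) by (apply Rplus_lt_0_compat; [apply Rinv_0_lt_compat; lra| lra]).
  rewrite pw_mult by lra.
  unfold pw at 2. 
  assert (0 < sqrt r) by (apply sqrt_lt_R0; auto).
  assert (0 < pw (/ V0 + r / 12)) by (apply pw_pos; apply Rplus_lt_0_compat; [apply Rinv_0_lt_compat; lra| lra]).
  field. split; lra.
Qed.

Definition mG (z V0 c d : R) := Rabs z / pw (d / V0 + z ^ 2 / 48) + rho V0 (Rabs (d - c)).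

Lemma rho_pos V0 r : 0 < V0 -> 0 < r -> 0 < rho V0 r.
Proof.
  intros. unfold rho. apply Rinv_0_lt_compat. apply Rmult_lt_0_compat. apply sqrt_lt_R0; auto.
  apply pw_pos. apply Rplus_lt_0_compat; [apply Rinv_0_lt_compat; lra| lra].
Qed.

Lemma P4 z V0 d : 0 < V0 -> z <> 0 -> 0 < d -> d <> Rmax z 0 ->
  Rabs (z - d) / pw (d / V0 + (z - d) ^ 2 / 12) <= mG z V0 (Rmax z 0) d.
Proof.
  intros HV Hz Hd Hdc. unfold mG.
  assert (HdV : 0 < d / V0) by (apply Rdiv_lt_0_compat; lra).
  assert (Hr : 0 < Rabs (d - Rmax z 0)) by (apply Rabs_pos_lt; lra).
  assert (Hrho := rho_pos V0 _ HV Hr).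
  assert (Hzz : 0 < Rabs z) by (apply Rabs_pos_lt; auto).
  assert (Ht : 0 <= Rabs z / pw (d / V0 + z ^ 2 / 48)).
  { left. apply Rdiv_lt_0_compat; auto. apply pw_pos. nra. }
  destruct (Rle_or_lt 0 z) as [Hz0|Hz0].
  - rewrite Rmax_left in * by lra. rewrite (Rabs_right z) in * by lra.
    destruct (Rle_or_lt (z/2) d) as [Hzd|Hzd].
    + set (r := Rabs (d - z)) in *.
      rewrite rho_eq by auto.
      assert (Er : Rabs (z - d) = r) by (unfold r; rewrite Rabs_minus_sym; auto).
      rewrite Er.
      assert (Hrd : r <= d) by (unfold r; apply Rabs_le; lra).
      assert (Ersq : (z - d) ^ 2 = r ^ 2) by (rewrite <- Er; rewrite <- Rsqr_pow2, <- Rsqr_pow2; apply Rsqr_abs).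
      rewrite Ersq.
      assert (r / pw (d / V0 + r ^ 2 / 12) <= r / pw (r / V0 + r ^ 2 / 12)).
      { unfold Rdiv. apply Rmult_le_compat_l; [lra|]. apply inv_pw_le. 
        assert (0 < r / V0) by (apply Rdiv_lt_0_compat; lra). nra.
        apply Rplus_le_compat_r. unfold Rdiv; apply Rmult_le_compat_r. left; apply Rinv_0_lt_compat; lra. auto. }
      lra.
    + assert (Rabs (z - d) / pw (d / V0 + (z - d) ^ 2 / 12) <= z / pw (d / V0 + z ^ 2 / 48)).
      { rewrite Rabs_right by lra. unfold Rdiv. apply Rmult_le_compat. lra.
        left; apply Rinv_0_lt_compat, pw_pos; nra. lra.
        apply inv_pw_le. nra. nra. }
      lra.
  - rewrite Rmax_right in * by lra. rewrite Rminus_0_r in *. rewrite (Rabs_right d) in * by lra.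
    rewrite (Rabs_left z) in * by lra. rewrite (Rabs_left (z - d)) by lra.
    rewrite rho_eq by auto.
    replace (- (z - d)) with (- z + d) by ring. unfold Rdiv at 1. rewrite Rmult_plus_distr_r.
    apply Rplus_le_compat.
    + unfold Rdiv. apply Rmult_le_compat_l. lra. apply inv_pw_le. nra. nra.
    + unfold Rdiv. apply Rmult_le_compat_l. lra. apply inv_pw_le. nra. nra.
Qed.

Definition G1 (z V0 d : R) := - (2 * Rabs z * V0) / sqrt (d / V0 + z ^ 2 / 48).
Definition Rf (V0 r : R) := 2 * V0 * sqrt r / sqrt (/ V0 + r / 12).
Definition G2 (V0 c d : R) := if Rle_dec c d then Rf V0 (d - c) else - Rf V0 (c - d).

Lemma G1_derive z V0 d : 0 < V0 -> 0 < d / V0 + z ^ 2 / 48 ->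
  is_derive (G1 z V0) d (Rabs z / pw (d / V0 + z ^ 2 / 48)).
Proof.
  intros HV Hp. unfold G1, pw.
  assert (0 < sqrt (d / V0 + z ^ 2 / 48)) by (apply sqrt_lt_R0; auto).
  auto_derive; replace (d * / V0 + z * (z * 1) / 48) with (d / V0 + z ^ 2 / 48) by (unfold Rdiv; ring).
  repeat split; lra.
  set (P := d / V0 + z ^ 2 / 48) in *.
  assert (Hs : sqrt P * sqrt P = P) by (apply sqrt_sqrt; lra).
  rewrite Hs. field. repeat split; lra.
Qed.

Lemma Rf_derive V0 r : 0 < V0 -> 0 < r -> is_derive (Rf V0) r (rho V0 r).
Proof.
  intros HV Hr. unfold Rf, rho, pw.
  assert (HQ : 0 < / V0 + r / 12) by (assert (0 < / V0) by (apply Rinv_0_lt_compat; lra); lra).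
  assert (0 < sqrt (/ V0 + r / 12)) by (apply sqrt_lt_R0; auto).
  assert (0 < sqrt r) by (apply sqrt_lt_R0; auto).
  auto_derive; replace (r * / 12) with (r / 12) by (unfold Rdiv; ring).
  repeat split; lra.
  assert (Hs1 : sqrt r * sqrt r = r) by (apply sqrt_sqrt; lra).
  assert (Hs2 : sqrt (/ V0 + r / 12) * sqrt (/ V0 + r / 12) = / V0 + r / 12) by (apply sqrt_sqrt; lra).
  set (Q := / V0 + r / 12) in *. set (sq := sqrt Q) in *. set (sr := sqrt r) in *.
  rewrite Hs2. 
  apply Rmult_eq_reg_r with (sr * (Q * sq)). 2: apply Rmult_integral_contrapositive; split; try lra; apply Rmult_integral_contrapositive; split; lra.
  rewrite Rinv_l by (apply Rmult_integral_contrapositive; split; try lra; apply Rmult_integral_contrapositive; split; lra).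
  field_simplify; try lra.
  replace (sr ^ 2) with r by (rewrite <- Hs1; ring). unfold Q. field. lra.
Qed.

Lemma G2_derive V0 c d : 0 < V0 -> d <> c -> is_derive (G2 V0 c) d (rho V0 (Rabs (d - c))).
Proof.
  intros HV Hdc.
  destruct (Rlt_or_le c d) as [Hlt|Hle].
  - apply is_derive_ext_loc with (fun y => Rf V0 (y - c)).
    + exists (mkposreal (d - c) ltac:(lra)). intros y Hy.
      change (Rabs (y - d) < d - c) in Hy. apply Rabs_def2 in Hy.
      unfold G2. destruct (Rle_dec c y); [auto|lra].
    + rewrite Rabs_right by lra.
      replace (rho V0 (d - c)) with (scal 1 (rho V0 (d - c))) by (unfold scal; simpl; unfold mult; simpl; ring).
      apply (is_derive_comp (Rf V0) (fun y => y - c)).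
      apply Rf_derive; lra.
      auto_derive; auto; ring.
  - assert (Hlt : d < c) by lra.
    apply is_derive_ext_loc with (fun y => - Rf V0 (c - y)).
    + exists (mkposreal (c - d) ltac:(lra)). intros y Hy.
      change (Rabs (y - d) < c - d) in Hy. apply Rabs_def2 in Hy.
      unfold G2. destruct (Rle_dec c y); [lra|auto].
    + rewrite Rabs_left by lra.
      replace (rho V0 (- (d - c))) with (opp (scal (-1) (rho V0 (c - d)))) by (unfold opp, scal; simpl; unfold mult; simpl; replace (- (d - c)) with (c - d) by ring; ring).
      apply (is_derive_opp (fun y => Rf V0 (c - y))).
      apply (is_derive_comp (Rf V0) (fun y => c - y)).
      apply Rf_derive; lra.
      auto_derive; auto; ring.
Qed.

Lemma Rf_nonneg V0 r : 0 < V0 -> 0 <= r -> 0 <= Rf V0 r.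
Proof.
  intros HV Hr. unfold Rf.
  assert (HQ : 0 < / V0 + r / 12) by (assert (0 < / V0) by (apply Rinv_0_lt_compat; lra); lra).
  assert (0 < sqrt (/ V0 + r / 12)) by (apply sqrt_lt_R0; auto).
  assert (0 <= sqrt r) by apply sqrt_pos.
  apply Rmult_le_pos. nra. left; apply Rinv_0_lt_compat; auto.
Qed.

Lemma Rf_bound V0 r : 0 < V0 -> 0 <= r -> Rf V0 r <= 2 * V0 * sqrt 12.
Proof.
  intros HV Hr. unfold Rf.
  assert (HQ : 0 < / V0 + r / 12) by (assert (0 < / V0) by (apply Rinv_0_lt_compat; lra); lra).
  assert (0 < sqrt (/ V0 + r / 12)) by (apply sqrt_lt_R0; auto).
  assert (Hs : sqrt r <= sqrt 12 * sqrt (/ V0 + r / 12)).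
  { rewrite <- sqrt_mult by lra. apply sqrt_le_1_alt.
    assert (0 < / V0) by (apply Rinv_0_lt_compat; lra). lra. }
  unfold Rdiv. apply Rmult_le_reg_r with (sqrt (/ V0 + r / 12)); auto.
  rewrite Rmult_assoc, Rinv_l by lra. nra.
Qed.

Lemma Rf_small V0 r : 0 < V0 -> 0 <= r -> Rf V0 r <= 2 * V0 * sqrt V0 * sqrt r.
Proof.
  intros HV Hr. unfold Rf.
  assert (HQ : 0 < / V0 + r / 12) by (assert (0 < / V0) by (apply Rinv_0_lt_compat; lra); lra).
  assert (0 < sqrt (/ V0 + r / 12)) by (apply sqrt_lt_R0; auto).
  assert (Hs : 1 <= sqrt V0 * sqrt (/ V0 + r / 12)).
  { rewrite <- sqrt_mult by lra. rewrite <- sqrt_1. apply sqrt_le_1_alt.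
    rewrite Rmult_plus_distr_l, Rinv_r by lra. assert (0 <= V0 * (r/12)) by (apply Rmult_le_pos; lra). lra. }
  assert (0 <= sqrt r) by apply sqrt_pos. assert (0 <= sqrt V0) by apply sqrt_pos.
  unfold Rdiv. apply Rmult_le_reg_r with (sqrt (/ V0 + r / 12)); auto.
  rewrite Rmult_assoc, Rinv_l by lra. 
  assert (0 <= 2 * V0 * sqrt r) by nra. nra.
Qed.

Lemma G2_abs V0 c d : 0 < V0 -> Rabs (G2 V0 c d) <= 2 * V0 * sqrt 12.
Proof.
  intros HV. unfold G2. destruct (Rle_dec c d).
  - rewrite Rabs_right. apply Rf_bound; lra. apply Rle_ge, Rf_nonneg; lra.
  - rewrite Rabs_Ropp, Rabs_right. apply Rf_bound; lra. apply Rle_ge, Rf_nonneg; lra.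
Qed.

Lemma G2_abs_small V0 c d : 0 < V0 -> Rabs (G2 V0 c d) <= 2 * V0 * sqrt V0 * sqrt (Rabs (d - c)).
Proof.
  intros HV. unfold G2. destruct (Rle_dec c d).
  - rewrite Rabs_right. rewrite Rabs_right by lra. apply Rf_small; lra. apply Rle_ge, Rf_nonneg; lra.
  - rewrite Rabs_Ropp, Rabs_right. rewrite Rabs_left by lra. replace (- (d - c)) with (c - d) by ring. apply Rf_small; lra. apply Rle_ge, Rf_nonneg; lra.
Qed.

Lemma G2_cont V0 c d : 0 < V0 -> continuous (G2 V0 c) d.
Proof.
  intros HV. destruct (Req_dec d c) as [->|Hne].
  - apply filterlim_locally. intros eps.
    set (K := 2 * V0 * sqrt V0 + 1).
    assert (HK : 0 < K) by (unfold K; assert (0 <= sqrt V0) by apply sqrt_pos; nra).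
    assert (Hd : 0 < (eps / K) ^ 2) by (apply pow_lt; apply Rdiv_lt_0_compat; [apply cond_pos| lra]).
    exists (mkposreal _ Hd). intros y Hy. change (Rabs (y - c) < (eps / K) ^ 2) in Hy.
    change (Rabs (G2 V0 c y - G2 V0 c c) < eps).
    assert (E0 : G2 V0 c c = 0).
    { unfold G2. destruct (Rle_dec c c); [|lra]. rewrite Rminus_diag. unfold Rf. rewrite sqrt_0. unfold Rdiv; ring. }
    rewrite E0, Rminus_0_r.
    eapply Rle_lt_trans. apply G2_abs_small; auto.
    assert (Hs : sqrt (Rabs (y - c)) < eps / K).
    { rewrite <- (sqrt_pow2 (eps / K)). apply sqrt_lt_1_alt. split; auto. apply Rabs_pos.
      left; apply Rdiv_lt_0_compat; [apply cond_pos| lra]. }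
    assert (0 <= sqrt (Rabs (y - c))) by apply sqrt_pos.
    assert (0 <= sqrt V0) by apply sqrt_pos.
    assert (K * (eps / K) = eps) by (field; lra).
    assert (2 * V0 * sqrt V0 * sqrt (Rabs (y - c)) <= K * sqrt (Rabs (y - c))) by (unfold K; nra).
    assert (K * sqrt (Rabs (y - c)) < K * (eps / K)) by (apply Rmult_lt_compat_l; auto).
    lra.
  - apply (ex_derive_continuous (K:=R_AbsRing) (V:=R_NormedModule)). eexists. apply G2_derive; auto.
Qed.

Lemma G1_nonpos z V0 d : 0 < V0 -> 0 <= d -> G1 z V0 d <= 0.
Proof.
  intros HV Hd. unfold G1. unfold Rdiv.
  assert (0 <= / sqrt (d / V0 + z ^ 2 / 48)).
  { destruct (Req_dec (sqrt (d / V0 + z ^ 2 / 48)) 0) as [E|E]. rewrite E, Rinv_0; lra.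
    left. apply Rinv_0_lt_compat. assert (0 <= sqrt (d / V0 + z ^ 2 / 48)) by apply sqrt_pos. lra. }
  assert (0 <= Rabs z) by apply Rabs_pos. 
  assert (0 <= 2 * Rabs z * V0) by nra. nra.
Qed.

Lemma G1_zero z V0 : 0 < V0 -> z <> 0 -> G1 z V0 0 = - (2 * V0 * sqrt 48).
Proof.
  intros HV Hz. unfold G1.
  replace (0 / V0 + z ^ 2 / 48) with (z ^ 2 * / 48) by (unfold Rdiv; ring).
  rewrite sqrt_mult by (try apply pow2_ge_0; left; apply Rinv_0_lt_compat; lra).
  rewrite <- Rsqr_pow2, sqrt_Rsqr_abs.
  rewrite sqrt_inv.
  assert (0 < sqrt 48) by (apply sqrt_lt_R0; lra).
  assert (0 < Rabs z) by (apply Rabs_pos_lt; auto).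
  field. split; lra.
Qed.

Lemma G_total z V0 c D : 0 < V0 -> z <> 0 -> 0 <= D ->
  (G1 z V0 D + G2 V0 c D) - (G1 z V0 0 + G2 V0 c 0) <= 2 * V0 * sqrt 48 + 4 * V0 * sqrt 12.
Proof.
  intros HV Hz HD.
  pose proof (G1_nonpos z V0 D HV HD).
  rewrite (G1_zero z V0 HV Hz).
  pose proof (G2_abs V0 c D HV). pose proof (G2_abs V0 c 0 HV).
  apply Rabs_le_between in H0. apply Rabs_le_between in H1. lra.
Qed.

Lemma final_const V0 : 0 < V0 ->
  / (4 * sqrt PI) * (2 * V0 * sqrt 48 + 4 * V0 * sqrt 12) <= 6 * V0.
Proof.
  intros HV.
  assert (Hpi : 3 < PI) by (pose proof PI2_3_2; lra).
  assert (H1 : sqrt 48 <= 7).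
  { rewrite <- (sqrt_pow2 7) by lra. apply sqrt_le_1_alt. lra. }
  assert (H2 : sqrt 12 <= 7/2).
  { rewrite <- (sqrt_pow2 (7/2)) by lra. apply sqrt_le_1_alt. lra. }
  assert (H3 : 17/10 <= sqrt PI).
  { rewrite <- (sqrt_pow2 (17/10)) by lra. apply sqrt_le_1_alt. lra. }
  assert (0 <= sqrt 48) by apply sqrt_pos. assert (0 <= sqrt 12) by apply sqrt_pos.
  apply Rmult_le_reg_l with (4 * sqrt PI). lra.
  rewrite <- Rmult_assoc, Rinv_r by lra. nra.
Qed.

Definition Kf gamma t tau := exp (- gamma * (t - tau)) * / sqrt (4 * PI * (t - tau)).
Definition Bf t tau := / (4 * (t - tau)).
Definition fI gamma (s v : R -> R) t y tau := exp (- gamma * (t - tau)) * heatG y t (s tau) tau * v tau.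
Definition f1 gamma (s v : R -> R) t y tau :=
  Kf gamma t tau * (exp (- (y - s tau) ^ 2 * Bf t tau) * (- (2 * (y - s tau)) * Bf t tau)) * v tau.
Definition f2 gamma (s v : R -> R) t y tau :=
  Kf gamma t tau * (exp (- (y - s tau) ^ 2 * Bf t tau) * ((2 * (y - s tau) * Bf t tau) ^ 2 - 2 * Bf t tau)) * v tau.

Lemma fI_alt gamma s v t y tau :
  fI gamma s v t y tau = Kf gamma t tau * exp (- (y - s tau) ^ 2 * Bf t tau) * v tau.
Proof. unfold fI, heatG, Kf, Bf, Rdiv. ring. Qed.

Lemma T1_eq gamma s v t y : T1 gamma s v t y = - RInt (fI gamma s v t y) 0 t.
Proof. reflexivity. Qed.

Lemma is_derive_ext_R (f g : R -> R) x l : (forall t : R, f t = g t) -> is_derive f x l -> is_derive g x l.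
Proof. intros H. apply is_derive_ext. exact H. Qed.

Lemma dexp xi B y : is_derive (fun y => exp (- (y - xi) ^ 2 * B)) y (exp (- (y - xi) ^ 2 * B) * (- (2 * (y - xi)) * B)).
Proof.
  auto_derive; auto.
  replace (- ((y + - xi) * ((y + - xi) * 1)) * B) with (- (y - xi) ^ 2 * B) by ring. ring.
Qed.

Lemma d_fI gamma s v t y tau : is_derive (fun y => fI gamma s v t y tau) y (f1 gamma s v t y tau).
Proof.
  apply is_derive_ext_R with (fun y => (Kf gamma t tau * v tau) * exp (- (y - s tau) ^ 2 * Bf t tau)).
  { intros t0. rewrite fI_alt. change (Kf gamma t tau * v tau * exp (- (t0 - s tau) ^ 2 * Bf t tau) = Kf gamma t tau * exp (- (t0 - s tau) ^ 2 * Bf t tau) * v tau :> R). ring. }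
  unfold f1.
  replace (Kf gamma t tau * (exp (- (y - s tau) ^ 2 * Bf t tau) * (- (2 * (y - s tau)) * Bf t tau)) * v tau)
    with (scal (Kf gamma t tau * v tau) (exp (- (y - s tau) ^ 2 * Bf t tau) * (- (2 * (y - s tau)) * Bf t tau))).
  2: { unfold scal; simpl; unfold mult; simpl; ring. }
  apply (is_derive_scal (fun y => exp (- (y - s tau) ^ 2 * Bf t tau))). apply dexp.
Qed.

Lemma d_f1 gamma s v t y tau : is_derive (fun y => f1 gamma s v t y tau) y (f2 gamma s v t y tau).
Proof.
  unfold f1, f2.
  set (B := Bf t tau). set (xi := s tau). set (K := Kf gamma t tau).
  assert (H := dexp xi B y).
  apply is_derive_ext_R with (fun y => (K * v tau) * ((exp (- (y - xi) ^ 2 * B)) * (- (2 * (y - xi)) * B))).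
  { intros; ring. }
  replace (K * (exp (- (y - xi) ^ 2 * B) * ((2 * (y - xi) * B) ^ 2 - 2 * B)) * v tau)
    with (scal (K * v tau) (exp (- (y - xi) ^ 2 * B) * (- (2 * (y - xi)) * B) * (- (2 * (y - xi)) * B) + exp (- (y - xi) ^ 2 * B) * (- 2 * B))).
  2: { unfold scal; simpl; unfold mult; simpl; ring. }
  apply (is_derive_scal (fun y => exp (- (y - xi) ^ 2 * B) * (- (2 * (y - xi)) * B))).
  apply (is_derive_mult (fun y => exp (- (y - xi) ^ 2 * B)) (fun y => - (2 * (y - xi)) * B)); auto.
  auto_derive; auto. ring.
  intros; unfold mult; simpl; ring.
Qed.


Lemma exp_ge_pow3 u : 0 <= u -> (u / 3) ^ 3 <= exp u.
Proof.
  intros Hu.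
  assert (E : exp u = exp (u/3) ^ 3) by (simpl; rewrite Rmult_1_r, <- !exp_plus; f_equal; field).
  rewrite E. apply pow_incr. split. apply Rmult_le_pos; lra.
  pose proof (exp_ineq1_le (u/3)). lra.
Qed.

Lemma exp_ge_pow4 u : 0 <= u -> (u / 4) ^ 4 <= exp u.
Proof.
  intros Hu.
  assert (E : exp u = exp (u/4) ^ 4) by (simpl; rewrite Rmult_1_r, <- !exp_plus; f_equal; field).
  rewrite E. apply pow_incr. split. apply Rmult_le_pos; lra.
  pose proof (exp_ineq1_le (u/4)). lra.
Qed.

Definition Lm sg1 m T := (1 + 4 * T) * (1 + / sg1) ^ 2 * / sqrt sg1 + (27 + 1024 * T) * 64 * (T + 1) ^ 3 / m ^ 3.

Lemma master sg Y sg1 m T : 0 < sg -> sg <= T -> 0 < sg1 -> 0 < m -> (sg1 <= sg \/ m <= Y ^ 2) ->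
  exp (- Y ^ 2 * / (4 * sg)) * (1 + Y ^ 2) * (1 + / sg) ^ 2 * / sqrt sg <= Lm sg1 m T.
Proof.
  intros Hs HT Hs1 Hm Hreg.
  set (u := Y ^ 2 / (4 * sg)).
  assert (Hu0 : 0 <= u) by (unfold u; apply Rmult_le_pos; [apply pow2_ge_0| left; apply Rinv_0_lt_compat; lra]).
  replace (- Y ^ 2 * / (4 * sg)) with (- u) by (unfold u, Rdiv; ring).
  assert (HY : Y ^ 2 = 4 * sg * u) by (unfold u; field; lra).
  rewrite exp_Ropp.
  assert (He : 0 < exp u) by apply exp_pos.
  set (p := sqrt sg).
  assert (Hp : 0 < p) by (apply sqrt_lt_R0; auto).
  assert (Hpp : p * p = sg) by (apply sqrt_sqrt; lra).
  assert (Hsg1pos : 0 < sqrt sg1) by (apply sqrt_lt_R0; auto).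
  assert (L1 : 0 <= (1 + 4 * T) * (1 + / sg1) ^ 2 * / sqrt sg1).
  { apply Rmult_le_pos. apply Rmult_le_pos. lra. apply pow2_ge_0. left; apply Rinv_0_lt_compat; auto. }
  assert (L2 : 0 <= (27 + 1024 * T) * 64 * (T + 1) ^ 3 / m ^ 3).
  { apply Rmult_le_pos. apply Rmult_le_pos. lra. apply pow_le; lra. left; apply Rinv_0_lt_compat; apply pow_lt; auto. }
  unfold Lm.
  destruct Hreg as [Hr|Hr].
  -
    assert (A1 : / exp u * (1 + Y ^ 2) <= 1 + 4 * T).
    { rewrite HY. pose proof (exp_ineq1_le u).
      apply Rmult_le_reg_l with (exp u); auto. rewrite <- Rmult_assoc, Rinv_r by lra.
      assert (4 * sg * u <= 4 * T * exp u) by nra. nra. }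
    assert (A2 : (1 + / sg) ^ 2 <= (1 + / sg1) ^ 2).
    { apply pow_incr. split. assert (0 < / sg) by (apply Rinv_0_lt_compat; lra). lra.
      apply Rplus_le_compat_l. apply Rinv_le_contravar; auto. }
    assert (A3 : / p <= / sqrt sg1).
    { apply Rinv_le_contravar; auto. apply sqrt_le_1_alt; auto. }
    assert (0 <= / exp u * (1 + Y ^ 2)) by (apply Rmult_le_pos; [left; apply Rinv_0_lt_compat; auto| pose proof (pow2_ge_0 Y); lra]).
    assert (0 <= (1 + / sg) ^ 2) by apply pow2_ge_0.
    assert (0 < / p) by (apply Rinv_0_lt_compat; auto).
    assert (/ exp u * (1 + Y ^ 2) * (1 + / sg) ^ 2 * / p <= (1 + 4 * T) * (1 + / sg1) ^ 2 * / sqrt sg1).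
    { apply Rmult_le_compat; try lra. apply Rmult_le_pos; lra. apply Rmult_le_compat; lra. }
    lra.
  -
    assert (Hu : m / (4 * sg) <= u) by (unfold u, Rdiv; apply Rmult_le_compat_r; [left; apply Rinv_0_lt_compat; lra| auto]).
    assert (Hmu : 0 < m / (4 * sg)) by (apply Rdiv_lt_0_compat; lra).
    assert (Hupos : 0 < u) by lra.
    pose proof (exp_ge_pow3 u Hu0) as E3. pose proof (exp_ge_pow4 u Hu0) as E4.
    assert (B1 : / exp u * u ^ 3 <= 27).
    { apply Rmult_le_reg_l with (exp u); auto. rewrite <- Rmult_assoc, Rinv_r by lra. 
      replace ((u / 3) ^ 3) with (u ^ 3 / 27) in E3 by (field). lra. }
    assert (B2 : / exp u * u ^ 4 <= 256).
    { apply Rmult_le_reg_l with (exp u); auto. rewrite <- Rmult_assoc, Rinv_r by lra. 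
      replace ((u / 4) ^ 4) with (u ^ 4 / 256) in E4 by (field). lra. }
    assert (B3 : / exp u * (1 + Y ^ 2) * u ^ 3 <= 27 + 1024 * T).
    { rewrite HY. replace (/ exp u * (1 + 4 * sg * u) * u ^ 3) with (/ exp u * u ^ 3 + 4 * sg * (/ exp u * u ^ 4)) by ring.
      assert (0 <= / exp u * u ^ 4) by (apply Rmult_le_pos; [left; apply Rinv_0_lt_compat; auto| apply pow_le; lra]).
      nra. }
    assert (B4 : (m / (4 * sg)) ^ 3 <= u ^ 3) by (apply pow_incr; lra).
    assert (Hq : 0 <= / exp u * (1 + Y ^ 2)) by (apply Rmult_le_pos; [left; apply Rinv_0_lt_compat; auto| pose proof (pow2_ge_0 Y); lra]).
    assert (B5 : / exp u * (1 + Y ^ 2) <= (27 + 1024 * T) * 64 * sg ^ 3 / m ^ 3).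
    { replace ((27 + 1024 * T) * 64 * sg ^ 3 / m ^ 3) with ((27 + 1024 * T) / (m / (4 * sg)) ^ 3) by (field; lra).
      apply Rmult_le_reg_r with ((m / (4 * sg)) ^ 3). apply pow_lt; auto.
      replace ((27 + 1024 * T) / (m / (4 * sg)) ^ 3 * (m / (4 * sg)) ^ 3) with (27 + 1024 * T) by (field; lra).
      assert (/ exp u * (1 + Y ^ 2) * (m / (4 * sg)) ^ 3 <= / exp u * (1 + Y ^ 2) * u ^ 3) by (apply Rmult_le_compat_l; auto).
      lra. }
    assert (B6 : (1 + / sg) ^ 2 * / p * sg ^ 3 = (sg + 1) ^ 2 * p).
    { rewrite <- Hpp. field. lra. }
    assert (B7 : p <= T + 1).
    { assert (p * p <= T) by lra. nra. }
    assert (0 <= (1 + / sg) ^ 2 * / p) by (apply Rmult_le_pos; [apply pow2_ge_0| left; apply Rinv_0_lt_compat; auto]).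
    assert (B8 : / exp u * (1 + Y ^ 2) * (1 + / sg) ^ 2 * / p <= (27 + 1024 * T) * 64 * sg ^ 3 / m ^ 3 * ((1 + / sg) ^ 2 * / p)).
    { replace (/ exp u * (1 + Y ^ 2) * (1 + / sg) ^ 2 * / p) with ((/ exp u * (1 + Y ^ 2)) * ((1 + / sg) ^ 2 * / p)) by ring. apply Rmult_le_compat_r; auto. }
    assert (B9 : (27 + 1024 * T) * 64 * sg ^ 3 / m ^ 3 * ((1 + / sg) ^ 2 * / p) = (27 + 1024 * T) * 64 / m ^ 3 * ((sg + 1) ^ 2 * p)).
    { rewrite <- B6. field. split; lra. }
    assert (B10 : (sg + 1) ^ 2 * p <= (T + 1) ^ 3).
    { assert ((sg + 1) ^ 2 <= (T + 1) ^ 2) by (apply pow_incr; lra).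
      replace ((T + 1) ^ 3) with ((T + 1) ^ 2 * (T + 1)) by ring.
      apply Rmult_le_compat; try lra. apply pow2_ge_0. }
    assert (0 <= (27 + 1024 * T) * 64 / m ^ 3).
    { apply Rmult_le_pos. lra. left; apply Rinv_0_lt_compat; apply pow_lt; auto. }
    assert ((27 + 1024 * T) * 64 / m ^ 3 * ((sg + 1) ^ 2 * p) <= (27 + 1024 * T) * 64 * (T + 1) ^ 3 / m ^ 3).
    { replace ((27 + 1024 * T) * 64 * (T + 1) ^ 3 / m ^ 3) with ((27 + 1024 * T) * 64 / m ^ 3 * (T + 1) ^ 3) by (field; lra).
      apply Rmult_le_compat_l; auto. }
    lra.
Qed.

Lemma Lm_nonneg sg1 m T : 0 < sg1 -> 0 < m -> 0 <= T -> 0 <= Lm sg1 m T.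
Proof.
  intros. unfold Lm. 
  assert (0 < sqrt sg1) by (apply sqrt_lt_R0; auto).
  apply Rplus_le_le_0_compat.
  apply Rmult_le_pos. apply Rmult_le_pos. lra. apply pow2_ge_0. left; apply Rinv_0_lt_compat; auto.
  apply Rmult_le_pos. apply Rmult_le_pos. lra. apply pow_le; lra. left; apply Rinv_0_lt_compat; apply pow_lt; auto.
Qed.

Lemma Kf_t gamma t : Kf gamma t t = 0.
Proof. unfold Kf. rewrite Rminus_diag. rewrite !Rmult_0_r. rewrite sqrt_0, Rinv_0. ring. Qed.

Lemma gen_bound gamma (s v : R -> R) t V0 sg1 m y tau Q :
  0 <= gamma -> 0 < t -> 0 <= tau <= t -> Rabs (v tau) <= V0 -> 0 < sg1 -> 0 < m ->
  (tau < t -> sg1 <= t - tau \/ m <= (y - s tau) ^ 2) ->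
  (tau < t -> Rabs Q <= (1 + (y - s tau) ^ 2) * (1 + / (t - tau)) ^ 2) ->
  Rabs (Kf gamma t tau * (exp (- (y - s tau) ^ 2 * Bf t tau) * Q) * v tau) <= V0 * Lm sg1 m t.
Proof.
  intros Hg Ht Htau Hv Hs1 Hm Hreg HQ.
  assert (HV0 : 0 <= V0) by (pose proof (Rabs_pos (v tau)); lra).
  assert (HL := Lm_nonneg sg1 m t Hs1 Hm ltac:(lra)).
  destruct (Req_dec tau t) as [->|Hne].
  { rewrite Kf_t. rewrite !Rmult_0_l, Rabs_R0. apply Rmult_le_pos; auto. }
  assert (Hlt : tau < t) by lra.
  set (sg := t - tau) in *.
  assert (Hsg : 0 < sg) by (unfold sg; lra).
  specialize (Hreg Hlt). specialize (HQ Hlt).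
  set (Y := y - s tau) in *.
  assert (HM := master sg Y sg1 m t Hsg ltac:(unfold sg; lra) Hs1 Hm Hreg).
  assert (HK : Rabs (Kf gamma t tau) <= / sqrt sg).
  { unfold Kf. fold sg. 
    assert (0 < sqrt sg) by (apply sqrt_lt_R0; auto).
    assert (Hs4 : sqrt sg <= sqrt (4 * PI * sg)).
    { apply sqrt_le_1_alt. assert (3 < PI) by (pose proof PI2_3_2; lra). nra. }
    assert (0 < sqrt (4 * PI * sg)) by lra.
    rewrite Rabs_mult, Rabs_right by (left; apply exp_pos).
    rewrite Rabs_right by (left; apply Rinv_0_lt_compat; lra).
    assert (exp (- gamma * sg) <= 1).
    { rewrite <- exp_0. destruct (Req_dec gamma 0) as [->|]. right; f_equal; ring.
      left. apply exp_increasing. nra. }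
    assert (/ sqrt (4 * PI * sg) <= / sqrt sg) by (apply Rinv_le_contravar; auto).
    assert (0 < / sqrt (4 * PI * sg)) by (apply Rinv_0_lt_compat; lra).
    assert (0 < exp (- gamma * sg)) by apply exp_pos.
    nra. }
  unfold Bf. fold sg.
  set (Ex := exp (- Y ^ 2 * / (4 * sg))) in *.
  assert (HEx : 0 < Ex) by apply exp_pos.
  rewrite !Rabs_mult. rewrite (Rabs_right Ex) by lra.
  assert (0 <= Rabs Q) by apply Rabs_pos.
  assert (0 <= Rabs (Kf gamma t tau)) by apply Rabs_pos.
  assert (0 <= Rabs (v tau)) by apply Rabs_pos.
  assert (HH1 : Rabs (Kf gamma t tau) * (Ex * Rabs Q) <= / sqrt sg * (Ex * ((1 + Y ^ 2) * (1 + / sg) ^ 2))).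
  { apply Rmult_le_compat; try nra. }
  assert (HH2 : / sqrt sg * (Ex * ((1 + Y ^ 2) * (1 + / sg) ^ 2)) <= Lm sg1 m t).
  { eapply Rle_trans; [|exact HM]. right; ring. }
  assert (0 <= Rabs (Kf gamma t tau) * (Ex * Rabs Q)) by (apply Rmult_le_pos; nra).
  rewrite Rmult_comm. apply Rmult_le_compat; try nra.
Qed.

Lemma Q_ineq1 Y i : 0 <= i -> Rabs 1 <= (1 + Y ^ 2) * (1 + i) ^ 2.
Proof. intros. rewrite Rabs_R1. assert (0 <= Y^2) by apply pow2_ge_0. nra. Qed.

Lemma absY_le Y : Rabs Y <= 1 + Y ^ 2.
Proof. destruct (Rle_or_lt 0 Y); [rewrite Rabs_right by lra| rewrite Rabs_left by lra]; nra. Qed.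

Lemma Q_ineq2 Y i : 0 <= i -> Rabs (- (2 * Y) * (/ 4 * i)) <= (1 + Y ^ 2) * (1 + i) ^ 2.
Proof.
  intros Hi. replace (- (2 * Y) * (/ 4 * i)) with (- (Y * (i / 2))) by field.
  rewrite Rabs_Ropp, Rabs_mult, (Rabs_right (i/2)) by lra.
  pose proof (absY_le Y). pose proof (Rabs_pos Y).
  apply Rmult_le_compat; try lra. nra.
Qed.

Lemma Q_ineq3 Y i : 0 <= i -> Rabs ((2 * Y * (/ 4 * i)) ^ 2 - 2 * (/ 4 * i)) <= (1 + Y ^ 2) * (1 + i) ^ 2.
Proof.
  intros Hi. eapply Rle_trans. apply Rabs_triang. rewrite Rabs_Ropp.
  rewrite (Rabs_right ((2 * Y * (/ 4 * i)) ^ 2)) by (apply Rle_ge, pow2_ge_0).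
  rewrite (Rabs_right (2 * (/ 4 * i))) by lra.
  assert (0 <= Y^2) by apply pow2_ge_0. assert (0 <= Y^2 * i^2) by (apply Rmult_le_pos; [auto| apply pow2_ge_0]).
  assert (0 <= Y^2 * i) by nra.
  replace ((2 * Y * (/ 4 * i)) ^ 2) with (Y ^ 2 * i ^ 2 / 4) by field. nra.
Qed.

Lemma Bf_eq t tau : tau < t -> Bf t tau = / 4 * / (t - tau).
Proof. intros. unfold Bf. rewrite Rinv_mult. auto. Qed.

Lemma all_bounds gamma (s v : R -> R) t V0 sg1 m y tau :
  0 <= gamma -> 0 < t -> 0 <= tau <= t -> Rabs (v tau) <= V0 -> 0 < sg1 -> 0 < m ->
  (tau < t -> sg1 <= t - tau \/ m <= (y - s tau) ^ 2) ->
  Rabs (fI gamma s v t y tau) <= V0 * Lm sg1 m t /\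
  Rabs (f1 gamma s v t y tau) <= V0 * Lm sg1 m t /\
  Rabs (f2 gamma s v t y tau) <= V0 * Lm sg1 m t.
Proof.
  intros Hg Ht Htau Hv Hs1 Hm Hreg.
  assert (Hi : tau < t -> 0 <= / (t - tau)) by (intros; left; apply Rinv_0_lt_compat; lra).
  split; [|split].
  - rewrite fI_alt. replace (Kf gamma t tau * exp (- (y - s tau) ^ 2 * Bf t tau) * v tau)
      with (Kf gamma t tau * (exp (- (y - s tau) ^ 2 * Bf t tau) * 1) * v tau) by ring.
    apply gen_bound; auto. intros Hlt. apply Q_ineq1; auto.
  - unfold f1. apply gen_bound; auto. intros Hlt. rewrite Bf_eq by auto. apply Q_ineq2; auto.
  - unfold f2. apply gen_bound; auto. intros Hlt. rewrite Bf_eq by auto. apply Q_ineq3; auto.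
Qed.

Lemma cont_fI gamma (s v : R -> R) t y tau : tau < t -> ex_derive s tau -> continuous v tau ->
  continuous (fI gamma s v t y) tau.
Proof.
  intros Ht Hs Hv.
  apply continuous_ext with (fun r => (Kf gamma t r * exp (- (y - s r) ^ 2 * Bf t r)) * v r).
  { intros r. rewrite fI_alt. reflexivity. }
  apply (continuous_mult (U:=R_UniformSpace) (K:=R_AbsRing)); auto.
  apply (ex_derive_continuous (K:=R_AbsRing) (V:=R_NormedModule)).
  unfold Kf, Bf. auto_derive. repeat split; auto.
  assert (3 < PI) by (pose proof PI2_3_2; lra). nra.
  assert (0 < sqrt (4 * PI * (t + - tau))) by (apply sqrt_lt_R0; assert (3 < PI) by (pose proof PI2_3_2; lra); nra). lra.
  lra.
Qed.

Lemma cont_f1 gamma (s v : R -> R) t y tau : tau < t -> ex_derive s tau -> continuous v tau ->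
  continuous (f1 gamma s v t y) tau.
Proof.
  intros Ht Hs Hv.
  unfold f1.
  apply (continuous_mult (U:=R_UniformSpace) (K:=R_AbsRing) (fun r => Kf gamma t r * (exp (- (y - s r) ^ 2 * Bf t r) * (- (2 * (y - s r)) * Bf t r)))); auto.
  apply (ex_derive_continuous (K:=R_AbsRing) (V:=R_NormedModule)).
  unfold Kf, Bf. auto_derive. repeat split; auto.
  assert (3 < PI) by (pose proof PI2_3_2; lra). nra.
  assert (0 < sqrt (4 * PI * (t + - tau))) by (apply sqrt_lt_R0; assert (3 < PI) by (pose proof PI2_3_2; lra); nra). lra.
  lra. lra.
Qed.

Lemma rc_eps (s : R -> R) : filterlim s (at_right 0) (locally 0) ->
  forall eps, 0 < eps -> exists del, 0 < del /\ forall r, 0 < r < del -> Rabs (s r) < eps.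
Proof.
  intros H eps He.
  destruct (proj1 (filterlim_locally _ _) H (mkposreal eps He)) as [del Hd].
  exists del. split. apply cond_pos. intros r [Hr1 Hr2].
  specialize (Hd r). 
  assert (B : ball 0 del r).
  { change (Rabs (r - 0) < del). rewrite Rminus_0_r, Rabs_right; lra. }
  specialize (Hd B Hr1). change (Rabs (s r - 0) < eps) in Hd. rewrite Rminus_0_r in Hd. auto.
Qed.

Lemma sbound_pos (s v : R -> R) v0 V0 :
  (forall r, 0 < r -> is_derive s r (v r)) -> (forall r, 0 <= r -> - V0 <= v r <= - v0) ->
  forall r1 r2, 0 < r1 -> r1 <= r2 -> v0 * (r2 - r1) <= s r1 - s r2 <= V0 * (r2 - r1).
Proof.
  intros Hd Hv r1 r2 H1 H12.
  destruct (MVT_gen s r1 r2 v) as [c [Hc E]].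
  - intros r Hr. rewrite Rmin_left, Rmax_right in Hr by lra. apply Hd. lra.
  - intros r Hr. rewrite Rmin_left, Rmax_right in Hr by lra. apply continuity_pt_filterlim.
    apply (ex_derive_continuous (K:=R_AbsRing) (V:=R_NormedModule)). eexists. apply Hd. lra.
  - rewrite Rmin_left, Rmax_right in Hc by lra.
    specialize (Hv c ltac:(lra)).
    assert (0 <= r2 - r1) by lra.
    split; nra.
Qed.

Lemma sbound (s v : R -> R) v0 V0 :
  s 0 = 0 -> filterlim s (at_right 0) (locally 0) -> 0 < v0 ->
  (forall r, 0 < r -> is_derive s r (v r)) -> (forall r, 0 <= r -> - V0 <= v r <= - v0) ->
  forall r1 r2, 0 <= r1 -> r1 <= r2 -> v0 * (r2 - r1) <= s r1 - s r2 <= V0 * (r2 - r1).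
Proof.
  intros H0 Hrc Hv0 Hd Hv r1 r2 H1 H12.
  destruct (Rlt_or_le 0 r1) as [Hp|Hz].
  - eapply sbound_pos; eauto.
  - assert (r1 = 0) by lra. subst r1.
    destruct (Req_dec r2 0) as [->|Hr2]. rewrite Rminus_diag, !Rmult_0_r. lra.
    rewrite H0.
    assert (K : forall eps, 0 < eps -> v0 * r2 - (v0 + 1) * eps <= - s r2 <= V0 * r2 + eps).
    { intros eps He.
      destruct (rc_eps s Hrc eps He) as [del [Hdel Hs]].
      set (r := Rmin (Rmin (del/2) (r2/2)) (eps/2)).
      assert (Hr : 0 < r /\ r < del /\ r < r2 /\ r < eps).
      { unfold r. repeat split.
        repeat apply Rmin_pos; lra.
        eapply Rle_lt_trans. apply Rmin_l. eapply Rle_lt_trans. apply Rmin_l. lra.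
        eapply Rle_lt_trans. apply Rmin_l. eapply Rle_lt_trans. apply Rmin_r. lra.
        eapply Rle_lt_trans. apply Rmin_r. lra. }
      assert (B := sbound_pos s v v0 V0 Hd Hv r r2 ltac:(lra) ltac:(lra)).
      specialize (Hs r ltac:(lra)). apply Rabs_def2 in Hs.
      assert (V0 >= v0) by (specialize (Hv 0 ltac:(lra)); lra).
      split; nra. }
    rewrite Rminus_0_r. split.
    + apply Rle_plus_epsilon. intros eps He.
      destruct (K (eps / (v0 + 1))) as [K1 _]. apply Rdiv_lt_0_compat; lra.
      replace ((v0 + 1) * (eps / (v0 + 1))) with eps in K1 by (field; lra). lra.
    + apply Rle_plus_epsilon. intros eps He. destruct (K eps He). lra.
Qed.

Lemma taylor (g g1 g2 : R -> R) x del L :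
  (forall y, is_derive g y (g1 y)) -> (forall y, is_derive g1 y (g2 y)) ->
  (forall y, Rabs (y - x) <= del -> Rabs (g2 y) <= L) ->
  forall y, Rabs (y - x) <= del -> Rabs (g y - g x - (y - x) * g1 x) <= L * (y - x) ^ 2.
Proof.
  intros Hg Hg1 HL y Hy.
  set (k := fun e => g e - g x - (e - x) * g1 x).
  assert (Hk : forall e, is_derive k e (g1 e - g1 x)).
  { intros e. unfold k.
    assert (A1 : is_derive (fun e => g e - g x) e (g1 e - 0)) by
      exact (is_derive_minus (K:=R_AbsRing) (V:=R_NormedModule) g (fun _ => g x) e _ _ (Hg e) (is_derive_const _ _)).
    assert (A2 : is_derive (fun e => e - x) e (1 - 0)) by
      exact (is_derive_minus (K:=R_AbsRing) (V:=R_NormedModule) (fun e => e) (fun _ => x) e _ _ (is_derive_id _) (is_derive_const _ _)).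
    assert (A3 : is_derive (fun e => (e - x) * g1 x) e ((1 - 0) * g1 x)) by
      exact (is_derive_scal_l (K:=R_AbsRing) _ _ _ _ A2).
    assert (A4 : is_derive (fun e => g e - g x - (e - x) * g1 x) e ((g1 e - 0) - (1 - 0) * g1 x)) by
      exact (is_derive_minus (K:=R_AbsRing) (V:=R_NormedModule) _ _ e _ _ A1 A3).
    replace (g1 e - g1 x) with ((g1 e - 0) - (1 - 0) * g1 x) by ring. exact A4. }
  destruct (MVT_cor4 k (fun e => g1 e - g1 x) x del (fun c _ => Hk c) y Hy) as [c [Ec Hc]].
  destruct (MVT_cor4 g1 g2 x del (fun c _ => Hg1 c) c ltac:(lra)) as [c' [Ec' Hc']].
  assert (Hkx : k x = 0) by (unfold k; ring).
  rewrite Hkx, Rminus_0_r in Ec. unfold k in Ec. rewrite Ec.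
  rewrite Ec'. rewrite !Rabs_mult.
  specialize (HL c' ltac:(lra)).
  assert (Rabs (c - x) <= Rabs (y - x)) by auto.
  assert (0 <= Rabs (c - x)) by apply Rabs_pos.
  assert (0 <= Rabs (y - x)) by apply Rabs_pos.
  assert (0 <= Rabs (g2 c')) by apply Rabs_pos.
  replace ((y - x) ^ 2) with (Rabs (y - x) * Rabs (y - x)).
  2: { rewrite <- Rabs_mult. rewrite Rabs_right. ring. apply Rle_ge. replace ((y-x)*(y-x)) with ((y-x)^2) by ring. apply pow2_ge_0. }
  rewrite <- Rmult_assoc. apply Rmult_le_compat_r; [lra|]. apply Rmult_le_compat; lra.
Qed.

Lemma RInt_lin3 (f g h : R -> R) a b c : ex_RInt f a b -> ex_RInt g a b -> ex_RInt h a b ->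
  ex_RInt (fun r => f r - g r - c * h r) a b /\
  RInt (fun r => f r - g r - c * h r) a b = RInt f a b - RInt g a b - c * RInt h a b.
Proof.
  intros Hf Hg Hh.
  assert (I := is_RInt_minus (V:=R_NormedModule) _ _ a b _ _
     (is_RInt_minus (V:=R_NormedModule) _ _ a b _ _ (RInt_correct _ _ _ Hf) (RInt_correct _ _ _ Hg))
     (is_RInt_scal (V:=R_NormedModule) _ a b c _ (RInt_correct _ _ _ Hh))).
  split. eexists. exact I. apply is_RInt_unique. exact I.
Qed.

Lemma deriv_param (F F1 F2 : R -> R -> R) x t del L : 0 < t -> 0 < del ->
  (forall y r, is_derive (fun y => F y r) y (F1 y r)) ->
  (forall y r, is_derive (fun y => F1 y r) y (F2 y r)) ->
  (forall y r, Rabs (y - x) <= del -> 0 <= r <= t -> Rabs (F2 y r) <= L) ->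
  (forall y, Rabs (y - x) <= del -> ex_RInt (F y) 0 t) ->
  ex_RInt (F1 x) 0 t ->
  is_derive (fun y => RInt (F y) 0 t) x (RInt (F1 x) 0 t).
Proof.
  intros Ht Hdel HF HF1 HL Hint Hint1.
  assert (HL0 : 0 <= L) by (specialize (HL x 0 ltac:(rewrite Rminus_diag, Rabs_R0; lra) ltac:(lra)); pose proof (Rabs_pos (F2 x 0)); lra).
  apply is_derive_Reals. intros eps He.
  assert (Hd : 0 < Rmin del (eps / (t * L + 1))) by (apply Rmin_pos; auto; apply Rdiv_lt_0_compat; nra).
  exists (mkposreal _ Hd). simpl. intros h Hh0 Hh.
  assert (Hh1 : Rabs h < del) by (eapply Rlt_le_trans; [exact Hh| apply Rmin_l]).
  assert (Hh2 : Rabs h < eps / (t * L + 1)) by (eapply Rlt_le_trans; [exact Hh| apply Rmin_r]).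
  assert (Hxh : Rabs (x + h - x) <= del) by (replace (x + h - x) with h by ring; lra).
  destruct (RInt_lin3 (F (x + h)) (F x) (F1 x) 0 t h (Hint _ Hxh) (Hint x ltac:(rewrite Rminus_diag, Rabs_R0; lra)) Hint1) as [Ex Eq].
  assert (B : Rabs (RInt (fun r => F (x + h) r - F x r - h * F1 x r) 0 t) <= (t - 0) * (L * h ^ 2)).
  { apply abs_RInt_le_const; auto. lra. intros r Hr.
    assert (T := taylor (fun y => F y r) (fun y => F1 y r) (fun y => F2 y r) x del L (fun y => HF y r) (fun y => HF1 y r)).
    specialize (T (fun y Hy => HL y r Hy Hr) (x + h) Hxh). simpl in T.
    replace (x + h - x) with h in T by ring. exact T. }
  rewrite Eq in B.
  assert (Hhp : 0 < Rabs h) by (apply Rabs_pos_lt; auto).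
  replace ((RInt (F (x + h)) 0 t - RInt (F x) 0 t) / h - RInt (F1 x) 0 t)
    with ((RInt (F (x + h)) 0 t - RInt (F x) 0 t - h * RInt (F1 x) 0 t) / h) by (field; auto).
  rewrite Rabs_div by auto.
  apply Rmult_lt_reg_r with (Rabs h); auto.
  unfold Rdiv. rewrite Rmult_assoc, Rinv_l by lra.
  replace (h ^ 2) with (Rabs h * Rabs h) in B by (rewrite <- Rabs_mult, Rabs_right; [ring| apply Rle_ge; replace (h*h) with (h^2) by ring; apply pow2_ge_0]).
  assert (Hlt : (t * L + 1) * Rabs h < eps).
  { apply Rmult_lt_reg_r with (/ (t * L + 1)). apply Rinv_0_lt_compat; nra.
    replace ((t * L + 1) * Rabs h * / (t * L + 1)) with (Rabs h) by (field; nra). exact Hh2. }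
  nra.
Qed.

Lemma key_pt gamma v0 V0 alpha z d sg w : 0 < v0 -> v0 <= V0 -> 0 < gamma -> 0 <= alpha ->
  alpha <= v0 / 8 -> alpha <= gamma / (2 * V0) -> 0 < sg -> v0 * sg <= d -> d <= V0 * sg ->
  z <> 0 -> d <> Rmax z 0 ->
  exp (alpha * Rabs z) * Rabs (exp (- gamma * sg) * / sqrt (4 * PI * sg) *
     (exp (- (z - d) ^ 2 * / (4 * sg)) * (- (2 * (z - d)) * / (4 * sg))) * w)
  <= / (4 * sqrt PI) * Rabs w * mG z V0 (Rmax z 0) d.
Proof.
  intros Hv0 HV Hg Ha Ha1 Ha2 Hs Hd1 Hd2 Hz Hdc.
  set (Y := z - d).
  assert (Hd : 0 < d) by nra.
  assert (HPI : 0 < PI) by (pose proof PI2_3_2; lra).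
  assert (Hsp : 0 < sqrt PI) by (apply sqrt_lt_R0; auto).
  assert (Hss : 0 < sqrt sg) by (apply sqrt_lt_R0; auto).
  assert (E4 : sqrt (4 * PI * sg) = 2 * sqrt PI * sqrt sg).
  { rewrite !sqrt_mult by lra. replace 4 with (2 * 2) by ring. rewrite sqrt_square by lra. ring. }
  assert (Hexp := expo_ineq alpha gamma v0 V0 z d sg Hv0 HV Hg Ha Ha1 Ha2 Hs Hd1 Hd2).
  fold Y in Hexp.
  assert (HG := gauss_pw sg Y Hs).
  assert (HP : 0 < d / V0 + Y ^ 2 / 12).
  { assert (0 < d / V0) by (apply Rdiv_lt_0_compat; lra). assert (0 <= Y^2) by apply pow2_ge_0. lra. }
  assert (HP2 : / pw (sg + Y ^ 2 / 12) <= / pw (d / V0 + Y ^ 2 / 12)).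
  { apply inv_pw_le; auto. apply Rplus_le_compat_r.
    apply Rmult_le_reg_r with V0. lra. unfold Rdiv. rewrite Rmult_assoc, Rinv_l by lra. lra. }
  assert (HP4 := P4 z V0 d ltac:(lra) Hz Hd Hdc). fold Y in HP4.
  assert (Epw : pw sg = sg * sqrt sg) by reflexivity.
  assert (Hpw : 0 < pw sg) by (apply pw_pos; auto).
  assert (LHS : Rabs (exp (- gamma * sg) * / sqrt (4 * PI * sg) *
     (exp (- Y ^ 2 * / (4 * sg)) * (- (2 * Y) * / (4 * sg))) * w)
     = / (4 * sqrt PI) * Rabs w * (exp (- gamma * sg) * exp (- (Y ^ 2 / (4 * sg))) * Rabs Y / pw sg)).
  { rewrite E4. rewrite !Rabs_mult.
    rewrite (Rabs_right (exp _)) by (left; apply exp_pos).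
    rewrite (Rabs_right (exp _)) by (left; apply exp_pos).
    rewrite (Rabs_right (/ _)) by (left; apply Rinv_0_lt_compat; nra).
    rewrite (Rabs_right (/ (4 * sg))) by (left; apply Rinv_0_lt_compat; nra).
    replace (- (2 * Y)) with ((-2) * Y) by ring. rewrite Rabs_mult.
    rewrite (Rabs_left (-2)) by lra.
    replace (- Y ^ 2 * / (4 * sg)) with (- (Y ^ 2 / (4 * sg))) by (unfold Rdiv; ring).
    rewrite Epw. field. repeat split; lra. }
  fold Y. rewrite LHS.
  set (A := exp (- gamma * sg) * exp (- (Y ^ 2 / (4 * sg)))).
  assert (HA : exp (alpha * Rabs z) * A <= exp (- (Y ^ 2 / (8 * sg)))).
  { unfold A. rewrite <- !exp_plus.
    destruct (Rle_lt_or_eq_dec _ _ Hexp) as [Hl|He]. left; apply exp_increasing.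
    replace (alpha * Rabs z + (- gamma * sg + - (Y ^ 2 / (4 * sg)))) with (alpha * Rabs z - gamma * sg - Y ^ 2 / (4 * sg)) by ring. auto.
    right. f_equal. rewrite <- He. ring. }
  assert (HA0 : 0 <= A) by (unfold A; left; apply Rmult_lt_0_compat; apply exp_pos).
  assert (HY0 : 0 <= Rabs Y) by apply Rabs_pos.
  assert (Hw0 : 0 <= Rabs w) by apply Rabs_pos.
  assert (HC : 0 < / (4 * sqrt PI)) by (apply Rinv_0_lt_compat; lra).
  assert (K1 : exp (alpha * Rabs z) * (A * Rabs Y / pw sg) <= Rabs Y * (exp (- (Y ^ 2 / (8 * sg))) / pw sg)).
  { assert (0 < / pw sg) by (apply Rinv_0_lt_compat; auto).
    replace (exp (alpha * Rabs z) * (A * Rabs Y / pw sg)) with ((Rabs Y / pw sg) * (exp (alpha * Rabs z) * A)) by (field; lra).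
    replace (Rabs Y * (exp (- (Y ^ 2 / (8 * sg))) / pw sg)) with ((Rabs Y / pw sg) * exp (- (Y ^ 2 / (8 * sg)))) by (field; lra).
    apply Rmult_le_compat_l; auto. apply Rmult_le_pos; lra. }
  assert (K2 : Rabs Y * (exp (- (Y ^ 2 / (8 * sg))) / pw sg) <= Rabs Y / pw (d / V0 + Y ^ 2 / 12)).
  { unfold Rdiv at 2. apply Rmult_le_compat_l; auto. lra. }
  assert (K3 : exp (alpha * Rabs z) * (A * Rabs Y / pw sg) <= mG z V0 (Rmax z 0) d) by lra.
  replace (exp (alpha * Rabs z) * (/ (4 * sqrt PI) * Rabs w * (A * Rabs Y / pw sg)))
    with (/ (4 * sqrt PI) * Rabs w * (exp (alpha * Rabs z) * (A * Rabs Y / pw sg))) by ring.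
  apply Rmult_le_compat_l. apply Rmult_le_pos; lra. auto.
Qed.

Lemma cont_eps (f : R -> R) x : continuous f x ->
  forall eps, 0 < eps -> exists del, 0 < del /\ forall y, Rabs (y - x) < del -> Rabs (f y - f x) < eps.
Proof.
  intros Hc eps He.
  destruct (proj1 (filterlim_locally _ _) Hc (mkposreal eps He)) as [del Hd].
  exists del. split. apply cond_pos. intros y Hy. apply (Hd y). exact Hy.
Qed.

Definition Gfun z V0 c d := G1 z V0 d + G2 V0 c d.

Lemma G_derive z V0 c d : 0 < V0 -> 0 <= d -> z <> 0 -> d <> c -> is_derive (Gfun z V0 c) d (mG z V0 c d).
Proof.
  intros HV Hd Hz Hdc. unfold Gfun, mG.
  apply (is_derive_plus (K:=R_AbsRing) (V:=R_NormedModule) (G1 z V0) (G2 V0 c)).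
  apply G1_derive; auto.
  assert (0 <= d / V0) by (apply Rmult_le_pos; [lra| left; apply Rinv_0_lt_compat; lra]).
  assert (0 < z ^ 2) by (apply pow2_gt_0; auto). lra.
  apply G2_derive; auto.
Qed.

Lemma G_cont z V0 c d : 0 < V0 -> 0 <= d -> z <> 0 -> continuous (Gfun z V0 c) d.
Proof.
  intros HV Hd Hz. unfold Gfun.
  apply (continuous_plus (U:=R_UniformSpace) (V:=R_NormedModule) (G1 z V0) (G2 V0 c)).
  apply (ex_derive_continuous (K:=R_AbsRing) (V:=R_NormedModule)). eexists. apply G1_derive; auto.
  assert (0 <= d / V0) by (apply Rmult_le_pos; [lra| left; apply Rinv_0_lt_compat; lra]).
  assert (0 < z ^ 2) by (apply pow2_gt_0; auto). lra.
  apply G2_cont; auto.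
Qed.

Lemma S8 gamma v0 V0 alpha (s v : R -> R) t x L :
 0 < gamma -> 0 < v0 -> v0 <= V0 -> 0 <= alpha -> alpha <= v0 / 8 -> alpha <= gamma / (2 * V0) ->
 s 0 = 0 -> filterlim s (at_right 0) (locally 0) ->
 (forall r, 0 < r -> is_derive s r (v r)) -> (forall r, 0 < r -> continuous v r) ->
 (forall r, 0 <= r -> - V0 <= v r <= - v0) -> 0 < t -> x <> s t ->
 ex_RInt (f1 gamma s v t x) 0 t -> (forall r, 0 <= r <= t -> Rabs (f1 gamma s v t x r) <= L) ->
 exp (alpha * Rabs (x - s t)) * Rabs (RInt (f1 gamma s v t x) 0 t)
   <= / (4 * sqrt PI) * (2 * V0 * sqrt 48 + 4 * V0 * sqrt 12).
Proof.
  intros Hg Hv0 HV Ha Ha1 Ha2 Hs0 Hrc Hsd Hvc Hvb Ht Hx Hint HL.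
  set (z := x - s t) in *.
  assert (Hz : z <> 0) by (unfold z; lra).
  set (c := Rmax z 0).
  set (Ez := exp (alpha * Rabs z)).
  assert (HEz : 0 < Ez) by apply exp_pos.
  set (Cc := / (4 * sqrt PI)).
  assert (HPI : 0 < PI) by (pose proof PI2_3_2; lra).
  assert (HCc : 0 < Cc) by (unfold Cc; apply Rinv_0_lt_compat; assert (0 < sqrt PI) by (apply sqrt_lt_R0; auto); lra).
  set (f := f1 gamma s v t x) in *.
  set (d := fun r => s r - s t).
  set (Phi := fun r => - Gfun z V0 c (d r)).
  set (I := fun r => RInt f 0 r).
  assert (HV0 : 0 < V0) by lra.
  assert (SB := sbound s v v0 V0 Hs0 Hrc Hv0 Hsd Hvb).
  assert (HL0 : 0 <= L) by (specialize (HL 0 ltac:(lra)); pose proof (Rabs_pos (f 0)); lra).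
  assert (Hintr : forall r, 0 <= r <= t -> ex_RInt f 0 r) by (intros r Hr; apply (ex_RInt_Chasles_1 (V:=R_CompleteNormedModule)) with t; auto).
  assert (HIb : forall a b, 0 <= a <= b -> b <= t -> Rabs (I b - I a) <= (b - a) * L).
  { intros a b Hab Hbt. unfold I.
    pose proof (RInt_Chasles (V:=R_CompleteNormedModule) f 0 a b (Hintr a ltac:(lra))
      ltac:(apply (ex_RInt_Chasles_2 (V:=R_CompleteNormedModule)) with 0; [lra| apply Hintr; lra])) as E1.
    change (RInt f 0 a + RInt f a b = RInt f 0 b) in E1.
    replace (RInt f 0 b - RInt f 0 a) with (RInt f a b) by lra.
    apply abs_RInt_le_const. lra. apply (ex_RInt_Chasles_2 (V:=R_CompleteNormedModule)) with 0. lra. apply Hintr; lra.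
    intros r Hr. apply HL. lra. }
  assert (HI0 : I 0 = 0) by (exact (RInt_point (V:=R_CompleteNormedModule) 0 f)).
  assert (Hd0 : d 0 = - s t) by (unfold d; rewrite Hs0; ring).
  assert (Hdt : d t = 0) by (unfold d; ring).
  assert (HdD : v0 * t <= d 0) by (unfold d; specialize (SB 0 t ltac:(lra) ltac:(lra)); lra).
  assert (Hdpos : forall r, 0 <= r < t -> 0 < d r) by (intros r Hr; unfold d; specialize (SB r t ltac:(lra) ltac:(lra)); nra).
  assert (Hdnn : forall r, 0 <= r <= t -> 0 <= d r) by (intros r Hr; unfold d; specialize (SB r t ltac:(lra) ltac:(lra)); nra).
  assert (Hsc : forall r, 0 < r -> continuous s r).
  { intros r Hr. apply (ex_derive_continuous (K:=R_AbsRing) (V:=R_NormedModule)). eexists. apply Hsd; auto. }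
  assert (Hdder : forall r, 0 < r -> is_derive d r (v r - 0)).
  { intros r Hr. unfold d. exact (is_derive_minus (K:=R_AbsRing) (V:=R_NormedModule) s (fun _ => s t) r _ _ (Hsd r Hr) (is_derive_const _ _)). }
  assert (Hdcont : forall r, 0 < r -> continuous d r).
  { intros r Hr. apply (ex_derive_continuous (K:=R_AbsRing) (V:=R_NormedModule)). eexists. apply Hdder; auto. }
  assert (HPhider : forall r, 0 < r < t -> d r <> c -> is_derive Phi r (- (v r * mG z V0 c (d r)))).
  { intros r Hr Hdc. unfold Phi.
    assert (H1 := is_derive_comp (K:=R_AbsRing) (V:=R_NormedModule) (Gfun z V0 c) d r _ _
       (G_derive z V0 c (d r) HV0 ltac:(specialize (Hdpos r ltac:(lra)); lra) Hz Hdc) (Hdder r ltac:(lra))).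
    assert (H2 := is_derive_opp (K:=R_AbsRing) (V:=R_NormedModule) _ r _ H1).
    replace (- (v r * mG z V0 c (d r))) with (opp (scal (v r - 0) (mG z V0 c (d r)))).
    exact H2. unfold opp, scal; simpl; unfold mult; simpl. ring. }
  assert (HPhicont : forall r, 0 < r <= t -> continuous Phi r).
  { intros r Hr. unfold Phi.
    apply (continuous_opp (V:=R_NormedModule) (fun r => Gfun z V0 c (d r))).
    apply (continuous_comp d (Gfun z V0 c)). apply Hdcont; lra.
    apply G_cont; auto. apply Hdnn; lra. }
  assert (HIder : forall r, 0 < r < t -> is_derive I r (f r)).
  { intros r Hr. apply (is_derive_RInt (V:=R_NormedModule) f I 0 r).
    - exists (mkposreal (Rmin r (t - r)) ltac:(apply Rmin_pos; lra)). intros b Hb.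
      change (Rabs (b - r) < Rmin r (t - r)) in Hb.
      assert (Hb1 : Rabs (b - r) < r) by (eapply Rlt_le_trans; [exact Hb| apply Rmin_l]).
      assert (Hb2 : Rabs (b - r) < t - r) by (eapply Rlt_le_trans; [exact Hb| apply Rmin_r]).
      apply Rabs_def2 in Hb1. apply Rabs_def2 in Hb2.
      unfold I. apply (RInt_correct (V:=R_CompleteNormedModule)). apply Hintr. lra.
    - apply cont_f1. lra. eexists; apply Hsd; lra. apply Hvc; lra. }
  assert (HIcont : forall r, 0 < r < t -> continuous I r).
  { intros r Hr. apply (ex_derive_continuous (K:=R_AbsRing) (V:=R_NormedModule)). eexists. apply HIder; auto. }
  assert (Hsg : forall sgn, (sgn = 1 \/ sgn = -1) -> sgn * (Ez * I t) <= Cc * (Phi t - Phi 0)).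
  { intros sgn Hsgn.
    set (Psi := fun r => Cc * Phi r - sgn * Ez * I r).
    assert (P : Psi 0 <= Psi t).
    { apply mono_ends; auto.
      - intros a b Ha0 Hab Hb.
        apply (mono2 Psi (fun r => Cc * (- (v r * mG z V0 c (d r))) - sgn * Ez * f r) (fun r => 0 < r /\ d r = c) a b Hab).
        + intros r1 r2 [Hr1 E1] [Hr2 E2].
          destruct (Rtotal_order r1 r2) as [Hlt|[Heq|Hgt]]; auto.
          * exfalso. specialize (SB r1 r2 ltac:(lra) ltac:(lra)). unfold d in E1, E2. nra.
          * exfalso. specialize (SB r2 r1 ltac:(lra) ltac:(lra)). unfold d in E1, E2. nra.
        + intros r Hr Hne.
          assert (Hdc : d r <> c) by (intros E; apply Hne; split; [lra|auto]).
          split.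
          * unfold Psi.
            apply (is_derive_minus (K:=R_AbsRing) (V:=R_NormedModule) (fun r => Cc * Phi r) (fun r => sgn * Ez * I r)).
            apply is_derive_scal. apply HPhider; auto. lra.
            apply is_derive_scal. apply HIder; lra.
          * assert (Hsgr : 0 < t - r) by lra.
            assert (SBr := SB r t ltac:(lra) ltac:(lra)).
            assert (Ex : x - s r = z - d r) by (unfold z, d; ring).
            assert (K := key_pt gamma v0 V0 alpha z (d r) (t - r) (v r) Hv0 HV Hg Ha Ha1 Ha2 Hsgr
                    ltac:(unfold d; lra) ltac:(unfold d; lra) Hz Hdc).
            assert (Ef : f r = exp (- gamma * (t - r)) * / sqrt (4 * PI * (t - r)) *
               (exp (- (z - d r) ^ 2 * / (4 * (t - r))) * (- (2 * (z - d r)) * / (4 * (t - r)))) * v r).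
            { unfold f, f1, Kf, Bf. rewrite Ex. reflexivity. }
            rewrite <- Ef in K. fold Ez in K. fold Cc in K.
            specialize (Hvb r ltac:(lra)).
            rewrite (Rabs_left (v r)) in K by lra.
            assert (Hsf : sgn * Ez * f r <= Ez * Rabs (f r)).
            { destruct Hsgn as [->| ->].
              - rewrite Rmult_1_l. apply Rmult_le_compat_l; [lra| apply Rle_abs].
              - replace (-1 * Ez * f r) with (Ez * (- f r)) by ring. apply Rmult_le_compat_l; [lra|].
                rewrite <- Rabs_Ropp. apply Rle_abs. }
            fold c in K. assert (Cc * - v r * mG z V0 c (d r) = Cc * - (v r * mG z V0 c (d r))) by ring. lra.
        + intros r Hr. unfold Psi.
          apply (continuous_minus (V:=R_NormedModule) (fun r => Cc * Phi r) (fun r => sgn * Ez * I r)).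
          apply (continuous_mult (K:=R_AbsRing) (fun _ => Cc) Phi). apply continuous_const. apply HPhicont; lra.
          apply (continuous_mult (K:=R_AbsRing) (fun _ => sgn * Ez) I). apply continuous_const. apply HIcont; lra.
      - intros eps He.
        assert (He2 : 0 < eps / (2 * Cc)) by (apply Rdiv_lt_0_compat; lra).
        destruct (cont_eps (Gfun z V0 c) (d 0) (G_cont z V0 c (d 0) HV0 ltac:(nra) Hz) _ He2) as [d1 [Hd1 Hc1]].
        destruct (rc_eps s Hrc d1 Hd1) as [d2 [Hd2 Hc2]].
        assert (He3 : 0 < eps / (2 * (Ez * (L + 1)))) by (apply Rdiv_lt_0_compat; nra).
        exists (Rmin (Rmin d2 t) (eps / (2 * (Ez * (L + 1))))).
        split. repeat apply Rmin_pos; lra.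
        intros r [Hr1 Hr2].
        assert (Hr3 : r < d2) by (eapply Rlt_le_trans; [exact Hr2|]; eapply Rle_trans; apply Rmin_l).
        assert (Hr4 : r < t) by (eapply Rlt_le_trans; [exact Hr2|]; eapply Rle_trans; [apply Rmin_l| apply Rmin_r]).
        assert (Hr5 : r < eps / (2 * (Ez * (L + 1)))) by (eapply Rlt_le_trans; [exact Hr2| apply Rmin_r]).
        specialize (Hc2 r ltac:(lra)).
        assert (Hdd : Rabs (d r - d 0) < d1) by (unfold d; rewrite Hs0; replace (s r - s t - (0 - s t)) with (s r) by ring; auto).
        specialize (Hc1 (d r) Hdd).
        assert (HI := HIb 0 r ltac:(lra) ltac:(lra)). rewrite HI0, Rminus_0_r, Rminus_0_r in HI.
        unfold Psi. rewrite HI0.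
        replace (Cc * Phi r - sgn * Ez * I r - (Cc * Phi 0 - sgn * Ez * 0)) with (Cc * (Phi r - Phi 0) - sgn * Ez * I r) by ring.
        eapply Rle_lt_trans. apply Rabs_triang. rewrite Rabs_Ropp, !Rabs_mult.
        rewrite (Rabs_right Cc) by lra. rewrite (Rabs_right Ez) by lra.
        assert (Hsg1 : Rabs sgn = 1) by (destruct Hsgn as [->| ->]; [apply Rabs_R1| rewrite Rabs_left by lra; lra]).
        rewrite Hsg1, Rmult_1_l.
        assert (EP : Phi r - Phi 0 = - (Gfun z V0 c (d r) - Gfun z V0 c (d 0))) by (unfold Phi; ring).
        rewrite EP, Rabs_Ropp.
        assert (A1 : Cc * Rabs (Gfun z V0 c (d r) - Gfun z V0 c (d 0)) < eps / 2).
        { replace (eps / 2) with (Cc * (eps / (2 * Cc))) by (field; lra). apply Rmult_lt_compat_l; auto. }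
        assert (A2 : Ez * Rabs (I r) <= Ez * (r * L)) by (apply Rmult_le_compat_l; lra).
        assert (A3 : Ez * (r * L) <= Ez * (L + 1) * r) by (assert (0 <= r * 1) by lra; nra).
        assert (A4 : Ez * (L + 1) * r < eps / 2).
        { replace (eps / 2) with (Ez * (L + 1) * (eps / (2 * (Ez * (L + 1))))) by (field; nra).
          apply Rmult_lt_compat_l; [nra| auto]. }
        lra.
      - intros eps He.
        assert (He2 : 0 < eps / (2 * Cc)) by (apply Rdiv_lt_0_compat; lra).
        destruct (cont_eps Phi t (HPhicont t ltac:(lra)) _ He2) as [d1 [Hd1 Hc1]].
        assert (He3 : 0 < eps / (2 * (Ez * (L + 1)))) by (apply Rdiv_lt_0_compat; nra).
        exists (Rmin (Rmin d1 t) (eps / (2 * (Ez * (L + 1))))).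
        split. repeat apply Rmin_pos; lra.
        intros r [Hr1 Hr2].
        assert (Hm1 : Rmin (Rmin d1 t) (eps / (2 * (Ez * (L + 1)))) <= d1) by (eapply Rle_trans; apply Rmin_l).
        assert (Hm2 : Rmin (Rmin d1 t) (eps / (2 * (Ez * (L + 1)))) <= t) by (eapply Rle_trans; [apply Rmin_l| apply Rmin_r]).
        assert (Hm3 : Rmin (Rmin d1 t) (eps / (2 * (Ez * (L + 1)))) <= eps / (2 * (Ez * (L + 1)))) by apply Rmin_r.
        assert (Hrr : Rabs (r - t) < d1) by (rewrite Rabs_left by lra; lra).
        specialize (Hc1 r Hrr).
        assert (HI := HIb r t ltac:(lra) ltac:(lra)).
        unfold Psi.
        replace (Cc * Phi r - sgn * Ez * I r - (Cc * Phi t - sgn * Ez * I t)) with (Cc * (Phi r - Phi t) + sgn * Ez * (I t - I r)) by ring.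
        eapply Rle_lt_trans. apply Rabs_triang. rewrite !Rabs_mult.
        rewrite (Rabs_right Cc) by lra. rewrite (Rabs_right Ez) by lra.
        assert (Hsg1 : Rabs sgn = 1) by (destruct Hsgn as [->| ->]; [apply Rabs_R1| rewrite Rabs_left by lra; lra]).
        rewrite Hsg1, Rmult_1_l.
        assert (A1 : Cc * Rabs (Phi r - Phi t) < eps / 2).
        { replace (eps / 2) with (Cc * (eps / (2 * Cc))) by (field; lra). apply Rmult_lt_compat_l; auto. }
        assert (A2 : Ez * Rabs (I t - I r) <= Ez * ((t - r) * L)) by (apply Rmult_le_compat_l; lra).
        assert (A3 : Ez * ((t - r) * L) <= Ez * (L + 1) * (t - r)) by (assert (0 <= (t - r) * 1) by lra; nra).
        assert (A4 : Ez * (L + 1) * (t - r) < eps / 2).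
        { replace (eps / 2) with (Ez * (L + 1) * (eps / (2 * (Ez * (L + 1))))) by (field; nra).
          apply Rmult_lt_compat_l; [nra| lra]. }
        lra. }
    unfold Psi in P. rewrite HI0 in P. lra. }
  assert (HPhi : Phi t - Phi 0 <= 2 * V0 * sqrt 48 + 4 * V0 * sqrt 12).
  { unfold Phi. rewrite Hdt. unfold Gfun.
    assert (0 <= d 0) by nra. pose proof (G_total z V0 c (d 0) HV0 Hz H). lra. }
  change (Ez * Rabs (I t) <= Cc * (2 * V0 * sqrt 48 + 4 * V0 * sqrt 12)).
  assert (Cc * (Phi t - Phi 0) <= Cc * (2 * V0 * sqrt 48 + 4 * V0 * sqrt 12)) by (apply Rmult_le_compat_l; lra).
  destruct (Rle_or_lt 0 (I t)) as [Hp|Hn].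
  - rewrite Rabs_right by lra. specialize (Hsg 1 (or_introl eq_refl)). lra.
  - rewrite Rabs_left by lra. specialize (Hsg (-1) (or_intror eq_refl)). lra.
Qed.

Lemma core gamma v0 V0 alpha (s v : R -> R) t x :
 0 < gamma -> 0 < v0 -> v0 <= V0 -> 0 <= alpha -> alpha <= v0 / 8 -> alpha <= gamma / (2 * V0) ->
 s 0 = 0 -> filterlim s (at_right 0) (locally 0) ->
 (forall r, 0 < r -> is_derive s r (v r)) -> (forall r, 0 < r -> continuous v r) ->
 (forall r, 0 <= r -> - V0 <= v r <= - v0) -> 0 < t -> x <> s t ->
 is_derive (fun y => T1 gamma s v t y) x (- RInt (f1 gamma s v t x) 0 t) /\
 exp (alpha * Rabs (x - s t)) * Rabs (- RInt (f1 gamma s v t x) 0 t) <= 6 * V0.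
Proof.
  intros Hg Hv0 HV Ha Ha1 Ha2 Hs0 Hrc Hsd Hvc Hvb Ht Hx.
  set (z := x - s t).
  assert (Hz : z <> 0) by (unfold z; lra).
  assert (Haz : 0 < Rabs z) by (apply Rabs_pos_lt; auto).
  assert (HV0 : 0 < V0) by lra.
  set (sg1 := Rabs z / (4 * V0)).
  assert (Hsg1 : 0 < sg1) by (unfold sg1; apply Rdiv_lt_0_compat; lra).
  set (m := z ^ 2 / 4).
  assert (Hm : 0 < m) by (unfold m; assert (0 < z ^ 2) by (apply pow2_gt_0; auto); lra).
  set (del := Rabs z / 4).
  assert (Hdel : 0 < del) by (unfold del; lra).
  set (L := V0 * Lm sg1 m t).
  assert (SB := sbound s v v0 V0 Hs0 Hrc Hv0 Hsd Hvb).
  assert (Hreg : forall y r, Rabs (y - x) <= del -> 0 <= r -> r < t -> sg1 <= t - r \/ m <= (y - s r) ^ 2).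
  { intros y r Hy Hr0 Hrt.
    destruct (Rle_or_lt sg1 (t - r)) as [Hl|Hl]; [left; auto| right].
    specialize (SB r t Hr0 ltac:(lra)).
    assert (Hd : s r - s t < Rabs z / 4).
    { assert (V0 * (t - r) < V0 * sg1) by (apply Rmult_lt_compat_l; lra).
      assert (V0 * sg1 = Rabs z / 4) by (unfold sg1; field; lra). lra. }
    assert (Hd0 : 0 <= s r - s t) by nra.
    assert (Htri : Rabs z <= Rabs (y - s r) + Rabs (y - x) + (s r - s t)).
    { replace z with ((y - s r) - (y - x) + (s r - s t)) by (unfold z; ring).
      eapply Rle_trans. apply Rabs_triang. rewrite (Rabs_right (s r - s t)) by lra.
      apply Rplus_le_compat_r. eapply Rle_trans. apply Rabs_triang. rewrite Rabs_Ropp. lra. }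
    assert (Hge : Rabs z / 2 <= Rabs (y - s r)) by (unfold del in Hy; lra).
    unfold m. rewrite <- (Rsqr_pow2 (y - s r)), Rsqr_abs, Rsqr_pow2.
    replace (z ^ 2) with (Rabs z ^ 2) by (rewrite <- !Rsqr_pow2; symmetry; apply Rsqr_abs).
    assert ((Rabs z / 2) ^ 2 <= Rabs (y - s r) ^ 2) by (apply pow_incr; lra).
    replace ((Rabs z / 2) ^ 2) with (Rabs z ^ 2 / 4) in H by field. lra. }
  assert (Hvabs : forall r, 0 <= r -> Rabs (v r) <= V0).
  { intros r Hr. specialize (Hvb r Hr). rewrite Rabs_left by lra. lra. }
  assert (Hb : forall y r, Rabs (y - x) <= del -> 0 <= r <= t ->
     Rabs (fI gamma s v t y r) <= L /\ Rabs (f1 gamma s v t y r) <= L /\ Rabs (f2 gamma s v t y r) <= L).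
  { intros y r Hy Hr. apply all_bounds; auto. lra. apply Hvabs; lra. intros Hrt. apply Hreg; auto; lra. }
  assert (Hintf : forall (F : R -> R), (forall r, 0 <= r <= t -> Rabs (F r) <= L) ->
     (forall r, 0 < r < t -> continuous F r) -> ex_RInt F 0 t).
  { intros F HFb HFc. apply ex_RInt_bounded_open with L; auto.
    intros a b Ha0 Hab Hbt. apply (ex_RInt_continuous (V:=R_CompleteNormedModule)).
    intros w Hw. rewrite Rmin_left, Rmax_right in Hw by lra. apply HFc. lra. }
  assert (HintI : forall y, Rabs (y - x) <= del -> ex_RInt (fI gamma s v t y) 0 t).
  { intros y Hy. apply Hintf. intros r Hr. apply (Hb y r Hy Hr).
    intros r Hr. apply cont_fI. lra. eexists; apply Hsd; lra. apply Hvc; lra. }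
  assert (Hx0 : Rabs (x - x) <= del) by (rewrite Rminus_diag, Rabs_R0; lra).
  assert (Hint1 : ex_RInt (f1 gamma s v t x) 0 t).
  { apply Hintf. intros r Hr. apply (Hb x r Hx0 Hr).
    intros r Hr. apply cont_f1. lra. eexists; apply Hsd; lra. apply Hvc; lra. }
  split.
  - assert (D := deriv_param (fI gamma s v t) (f1 gamma s v t) (f2 gamma s v t) x t del L Ht Hdel
       (fun y r => d_fI gamma s v t y r) (fun y r => d_f1 gamma s v t y r)
       (fun y r Hy Hr => proj2 (proj2 (Hb y r Hy Hr))) HintI Hint1).
    exact (is_derive_opp (K:=R_AbsRing) (V:=R_NormedModule) _ x _ D).
  - rewrite Rabs_Ropp.
    assert (S := S8 gamma v0 V0 alpha s v t x L Hg Hv0 HV Ha Ha1 Ha2 Hs0 Hrc Hsd Hvc Hvb Ht Hx Hint1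
       (fun r Hr => proj1 (proj2 (Hb x r Hx0 Hr)))).
    assert (Fc := final_const V0 HV0). fold z in S. lra.
Qed.


Theorem mainTheorem7 (gamma v0 V0 C alpha : R) (g u0 s v : R -> R) (u : R -> R -> R) :
  0 < gamma -> 0 < v0 -> v0 <= V0 -> kinetics v0 V0 C g ->
  0 <= alpha -> alpha < Rmin (v0 / 8) (gamma / (2 * V0)) ->
  in_C_alpha alpha u0 ->
  fi_solution gamma v0 V0 g u0 s v u ->
  forall t x, 0 < t -> x <> s t ->
    ex_derive (fun y => T1 gamma s v t y) x /\
    exp (alpha * Rabs (x - s t)) * Rabs (Derive (fun y => T1 gamma s v t y) x)
      <= bigM v0 V0 alpha gamma.
Proof.
  intros Hg Hv0 HV _ Ha Hal _ Hsol t x Ht Hx.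
  destruct Hsol as (Hs0 & Hrc & Hsd & Hvc & Hvb & _).
  assert (Ha1 : alpha <= v0 / 8) by (pose proof (Rmin_l (v0 / 8) (gamma / (2 * V0))); lra).
  assert (Ha2 : alpha <= gamma / (2 * V0)) by (pose proof (Rmin_r (v0 / 8) (gamma / (2 * V0))); lra).
  destruct (core gamma v0 V0 alpha s v t x Hg Hv0 HV Ha Ha1 Ha2 Hs0 Hrc Hsd Hvc Hvb Ht Hx) as [Hd Hb].
  split.
  - eexists. exact Hd.
  - replace (Derive (fun y => T1 gamma s v t y) x) with (- RInt (f1 gamma s v t x) 0 t)
      by (symmetry; apply is_derive_unique; exact Hd).
    eapply Rle_trans. exact Hb.
    unfold bigM.
    assert (Hsq : 0 < sqrt gamma) by (apply sqrt_lt_R0; auto).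
    assert (H2 : 0 < 2 / sqrt gamma) by (apply Rdiv_lt_0_compat; lra).
    assert (H3 : 2 / sqrt gamma + 6 <= Rmax (8 / (exp 1 * v0)) (Rmax (/ 2 * (1 + V0 / v0) * exp alpha) (2 / sqrt gamma + 6))).
    { eapply Rle_trans; [| apply Rmax_r]. apply Rmax_r. }
    assert (0 < V0) by lra. nra.
Qed.
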